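(* For every linkage $\mathcal{L}=(G,\ell)$, the annotation map $\mathrm{Annot}_{\mathcal{L}}:(\mathbb{R}^2)^{V}\to(\mathbb{R}^2)^{V}\times\mathbb{R}^{E\times E}$ is injective, semi-algebraic, and continuous on the set of nontouching configurations of linkages $\epsilon$-related to $\mathcal L$ (for any $\epsilon\ge0$), i.e. on $\bigcup_{\epsilon\ge 0}\mathrm{NConf}_\epsilon(\mathcal L)$.
   Context: A linkage is a pair $\mathcal L=(G,\ell)$ with $G=(V,E)$ a finite graph and $\ell:E\to\mathbb R_{\ge0}$ (edges are called bars; zero lengths are allowed). A configuration of $\mathcal L$ is a map $C:V\to\mathbb R^2$ with $|C(v)-C(w)|=\ell(v,w)$ for every bar $(v,w)$. Two linkages $(G_1,\ell_1),(G_2,\ell_2)$ are $\epsilon$-related if $G_1=G_2$ and $|\ell_1(e)-\ell_2(e)|\le\epsilon$ for all edges $e$. A configuration $C$ of a linkage $\mathcal L'=(G,\ell')$ is nontouching if no two bars intersect except at endpoints, and two vertices have the same position if and only if they are joined in $G$ by a path of bars of $\ell'$-length zero (vertices joined by such a path are regarded as merged into one vertex, so bars incident to them may meet at that common point). $\mathrm{NConf}_\epsilon(\mathcal L)$ denotes the set of nontouching configurations of linkages $\epsilon$-related to $\mathcal L$ (as maps $V\to\mathbb R^2$). Order function: for oriented segments $e_1,e_2$, in coordinates where $e_1$ runs from $(0,0)$ to $(l,0)$, let $d_\pm(e_1,e_2)=\mathrm{len}\{x\in[0,l]:\exists y,\ \pm y\ge 0,\ (x,y)\in e_2\}$ and $\mathrm{Ord}(e_1,e_2)=d_+-d_-$.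 Each edge is given a fixed canonical orientation; for $e=(u,v)$ write $C(e)$ for the oriented segment from $C(u)$ to $C(v)$. The annotation map is $\mathrm{Annot}_{\mathcal L}(C)=(C,A)$ where $A_{i,j}=\mathrm{Ord}(C(e_i),C(e_j))$ for $e_i,e_j\in E$. *)

(* Defs.v *)
From Stdlib Require Import Reals Lra List Relations ClassicalEpsilon.
Open Scope R_scope.

Definition pt := (R * R)%type.

Definition dist (p q : pt) : R :=
  sqrt ((fst q - fst p)^2 + (snd q - snd p)^2).

Definition on_seg (a b z : pt) : Prop :=
  exists t, 0 <= t <= 1 /\
    fst z = fst a + t * (fst b - fst a) /\ snd z = snd a + t * (snd b - snd a).

(** * Length of a subset of R.
    The sets to which [len] is applied below are intervals (projections of
    convex sets), whose Lebesgue measure is their diameter sup - inf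
    (and 0 when empty).  *)
Definition is_inf (S : R -> Prop) (a : R) : Prop :=
  (forall x, S x -> a <= x) /\ (forall a', (forall x, S x -> a' <= x) -> a' <= a).
Definition is_sup (S : R -> Prop) (b : R) : Prop :=
  (forall x, S x -> x <= b) /\ (forall b', (forall x, S x -> x <= b') -> b <= b').
Definition is_len (S : R -> Prop) (r : R) : Prop :=
  ((forall x, ~ S x) /\ r = 0) \/
  (exists a b, is_inf S a /\ is_sup S b /\ r = b - a).
Definition len (S : R -> Prop) : R := epsilon (inhabits 0) (is_len S).

(** * Order function.
    Coordinates in which e1 = [p,q] runs from (0,0) to (l,0), l = |q-p|:
    X z = (z-p).u, Y z = u x (z-p), with u = (q-p)/l. *)
Definition ord_X (p q z : pt) : R :=
  let l := dist p q in
  (fst z - fst p) * ((fst q - fst p) / l) + (snd z - snd p) * ((snd q - snd p) / l).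
Definition ord_Y (p q z : pt) : R :=
  let l := dist p q in
  ((fst q - fst p) / l) * (snd z - snd p) - ((snd q - snd p) / l) * (fst z - fst p).

(** d_+ (sgn = 1) and d_- (sgn = -1) *)
Definition d_pm (sgn : R) (e1 e2 : pt * pt) : R :=
  let (p, q) := e1 in let (a, b) := e2 in
  len (fun x => 0 <= x <= dist p q /\
         exists z, on_seg a b z /\ ord_X p q z = x /\ sgn * ord_Y p q z >= 0).

Definition Ord (e1 e2 : pt * pt) : R := d_pm 1 e1 e2 - d_pm (-1) e1 e2.

(** Vertices are 0..n-1; edges are a list [E] of ordered pairs (u,v) (the
    pair order is the canonical orientation); edge i is [nth i E (0,0)];
    lengths are given by a function on edge indices. *)
Definition edge (E : list (nat * nat)) (i : nat) : nat * nat := nth i E (0%nat, 0%nat).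

Definition simple_graph (n : nat) (E : list (nat * nat)) : Prop :=
  NoDup E /\
  (forall u v, In (u, v) E -> (u < n)%nat /\ (v < n)%nat /\ u <> v /\ ~ In (v, u) E).

Definition Cseg (C : nat -> pt) (e : nat * nat) : pt * pt := (C (fst e), C (snd e)).

Definition is_config (E : list (nat * nat)) (l : nat -> R) (C : nat -> pt) : Prop :=
  forall i, (i < length E)%nat -> dist (C (fst (edge E i))) (C (snd (edge E i))) = l i.

Definition zero_adj (E : list (nat * nat)) (l : nat -> R) (x y : nat) : Prop :=
  exists i, (i < length E)%nat /\ l i = 0 /\
    ((fst (edge E i) = x /\ snd (edge E i) = y) \/ (fst (edge E i) = y /\ snd (edge E i) = x)).
Definition merged E l : relation nat := clos_refl_trans nat (zero_adj E l).

Definition nontouching (n : nat) (E : list (nat * nat)) (l : nat -> R) (C : nat -> pt) : Prop :=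
  (forall i j z, (i < length E)%nat -> (j < length E)%nat -> i <> j ->
     on_seg (C (fst (edge E i))) (C (snd (edge E i))) z ->
     on_seg (C (fst (edge E j))) (C (snd (edge E j))) z ->
     (z = C (fst (edge E i)) \/ z = C (snd (edge E i))) /\
     (z = C (fst (edge E j)) \/ z = C (snd (edge E j)))) /\
  (forall x y, (x < n)%nat -> (y < n)%nat -> (C x = C y <-> merged E l x y)).

Definition eps_related (E : list (nat * nat)) (eps : R) (l l' : nat -> R) : Prop :=
  forall i, (i < length E)%nat -> Rabs (l' i - l i) <= eps.

Definition NConf (n : nat) (E : list (nat * nat)) (l : nat -> R) (eps : R) (C : nat -> pt) : Prop :=
  exists l', (forall i, (i < length E)%nat -> 0 <= l' i) /\ eps_related E eps l l' /\
             is_config E l' C /\ nontouching n E l' C.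

Definition NConf_all n E l (C : nat -> pt) : Prop := exists eps, 0 <= eps /\ NConf n E l eps C.

Definition AnnotA (E : list (nat * nat)) (C : nat -> pt) (i j : nat) : R :=
  Ord (Cseg C (edge E i)) (Cseg C (edge E j)).

(** * Semi-algebraic sets in R^k (points are [nat -> R], coordinates 0..k-1). *)
Inductive rpoly : Type :=
| PVar : nat -> rpoly
| PConst : R -> rpoly
| PAdd : rpoly -> rpoly -> rpoly
| PMul : rpoly -> rpoly -> rpoly
| POpp : rpoly -> rpoly.

Fixpoint peval (x : nat -> R) (p : rpoly) : R :=
  match p with
  | PVar i => x i | PConst c => c
  | PAdd p q => peval x p + peval x q
  | PMul p q => peval x p * peval x q
  | POpp p => - peval x p
  end.

Fixpoint pvars_lt (k : nat) (p : rpoly) : Prop :=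
  match p with
  | PVar i => (i < k)%nat | PConst _ => True
  | PAdd p q | PMul p q => pvars_lt k p /\ pvars_lt k q
  | POpp p => pvars_lt k p
  end.

Inductive qf : Type :=
| FEq0 : rpoly -> qf
| FPos : rpoly -> qf
| FAnd : qf -> qf -> qf
| FOr : qf -> qf -> qf
| FNot : qf -> qf.

Fixpoint qeval (x : nat -> R) (f : qf) : Prop :=
  match f with
  | FEq0 p => peval x p = 0
  | FPos p => peval x p > 0
  | FAnd f g => qeval x f /\ qeval x g
  | FOr f g => qeval x f \/ qeval x g
  | FNot f => ~ qeval x f
  end.

Fixpoint qvars_lt (k : nat) (f : qf) : Prop :=
  match f with
  | FEq0 p | FPos p => pvars_lt k p
  | FAnd f g | FOr f g => qvars_lt k f /\ qvars_lt k g
  | FNot f => qvars_lt k f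
  end.

Definition semialgebraic (k : nat) (P : (nat -> R) -> Prop) : Prop :=
  exists f, qvars_lt k f /\ forall x, P x <-> qeval x f.

(** Graph of Annot restricted to NConf_all, as a subset of
    R^{2n} x R^{2n} x R^{m*m}: coordinates 2v,2v+1 = C(v);
    2n+2v, 2n+2v+1 = first output component; 4n + i*m + j = A_{i,j}. *)
Definition Annot_graph (n : nat) (E : list (nat * nat)) (l : nat -> R) (z : nat -> R) : Prop :=
  let m := length E in
  let C := fun v => (z (2 * v)%nat, z (2 * v + 1)%nat) in
  NConf_all n E l C /\
  (forall v, (v < n)%nat -> z (2 * n + 2 * v)%nat = fst (C v) /\ z (2 * n + 2 * v + 1)%nat = snd (C v)) /\
  (forall i j, (i < m)%nat -> (j < m)%nat -> z (4 * n + i * m + j)%nat = AnnotA E C i j).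

(* Main.v *)
Require Import Defs.
From Stdlib Require Import Reals List.
From Stdlib Require Import Reals Lra Lia List Relations Classical ClassicalEpsilon FunctionalExtensionality PropExtensionality.
Open Scope R_scope.

Lemma len_ext (S T : R -> Prop) : (forall x, S x <-> T x) -> len S = len T.
Proof.
  intro H. assert (S = T) as ->; [|reflexivity].
  apply functional_extensionality; intro x; apply propositional_extensionality; auto.
Qed.

Lemma is_len_interval u v : u <= v -> forall r, is_len (fun x => u <= x <= v) r -> r = v - u.
Proof.
  intros Huv r [[H _]|(a & b & [Ha1 Ha2] & [Hb1 Hb2] & ->)].
  - exfalso; apply (H u); lra.
  - assert (a = u).
    { assert (a <= u) by (apply Ha1; lra).
      assert (u <= a) by (apply Ha2; intros x Hx; lra). lra. }
    assert (b = v).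
    { assert (v <= b) by (apply Hb1; lra).
      assert (b <= v) by (apply Hb2; intros x Hx; lra). lra. }
    subst; reflexivity.
Qed.

Lemma len_interval u v : u <= v -> len (fun x => u <= x <= v) = v - u.
Proof.
  intro Huv. apply is_len_interval; [exact Huv|].
  unfold len. apply epsilon_spec. exists (v - u). right. exists u, v.
  split; [split|split; [split|reflexivity]].
  - intros x Hx; lra.
  - intros a' Ha'. apply Ha'. lra.
  - intros x Hx; lra.
  - intros b' Hb'. apply Hb'. lra.
Qed.

Lemma len_interval' (S : R -> Prop) u v : u <= v -> (forall x, S x <-> u <= x <= v) -> len S = v - u.
Proof. intros H1 H2. rewrite (len_ext S (fun x => u <= x <= v) H2). apply len_interval; auto. Qed.

Lemma len_sub_single (S : R -> Prop) c : (forall x, S x -> x = c) -> len S = 0.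
Proof.
  intro H. destruct (classic (S c)) as [Hc|Hc].
  - replace 0 with (c - c) by ring. apply len_interval'; [lra|].
    intro x; split; intro Hx.
    + apply H in Hx; lra.
    + assert (x = c) by lra. subst; auto.
  - assert (He : forall x, ~ S x) by (intros x Hx; pose proof (H x Hx); subst; auto).
    assert (Hl : is_len S (len S)).
    { unfold len. apply epsilon_spec. exists 0. left. auto. }
    destruct Hl as [[_ H0]|(a & b & [Ha1 Ha2] & _ & _)]; auto.
    exfalso. assert (a + 1 <= a) by (apply Ha2; intros x Hx; exfalso; eapply He; eauto). lra.
Qed.

Definition Qn (p q : pt) := (fst q - fst p)*(fst q - fst p) + (snd q - snd p)*(snd q - snd p).
Definition Xs (p q z : pt) := (fst z - fst p)*(fst q - fst p) + (snd z - snd p)*(snd q - snd p).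
Definition Ys (p q z : pt) := (fst q - fst p)*(snd z - snd p) - (snd q - snd p)*(fst z - fst p).

Lemma Qn_nonneg p q : 0 <= Qn p q.
Proof. unfold Qn. pose proof (Rle_0_sqr (fst q - fst p)); pose proof (Rle_0_sqr (snd q - snd p)); unfold Rsqr in *; lra. Qed.

Lemma dist_sqrtQ p q : Defs.dist p q = sqrt (Qn p q).
Proof. unfold Defs.dist, Qn. f_equal. ring. Qed.

Lemma ordX_eq p q z : ord_X p q z = Xs p q z / Defs.dist p q.
Proof. unfold ord_X, Xs, Rdiv. ring. Qed.
Lemma ordY_eq p q z : ord_Y p q z = Ys p q z / Defs.dist p q.
Proof. unfold ord_Y, Ys, Rdiv. ring. Qed.

Lemma frame_x p q z : Qn p q * (fst z - fst p) = Xs p q z * (fst q - fst p) - Ys p q z * (snd q - snd p).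
Proof. unfold Qn, Xs, Ys; ring. Qed.
Lemma frame_y p q z : Qn p q * (snd z - snd p) = Xs p q z * (snd q - snd p) + Ys p q z * (fst q - fst p).
Proof. unfold Qn, Xs, Ys; ring. Qed.

Lemma pt_eq_frame p q z z' : Qn p q > 0 ->
  (z = z' <-> Xs p q z = Xs p q z' /\ Ys p q z = Ys p q z').
Proof.
  intro HQ; split; [intros ->; auto|].
  intros [H1 H2].
  destruct z as [zx zy], z' as [zx' zy'].
  pose proof (frame_x p q (zx,zy)) as A1. pose proof (frame_x p q (zx',zy')) as A2.
  pose proof (frame_y p q (zx,zy)) as B1. pose proof (frame_y p q (zx',zy')) as B2.
  rewrite H1, H2 in A1, B1. simpl in *.
  assert (Qn p q * (zx - zx') = 0) by lra. assert (Qn p q * (zy - zy') = 0) by lra.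
  apply Rmult_integral in H. apply Rmult_integral in H0.
  destruct H, H0; try lra. f_equal; lra.
Qed.

Lemma on_seg_frame p q z : Qn p q > 0 ->
  (on_seg p q z <-> Ys p q z = 0 /\ 0 <= Xs p q z <= Qn p q).
Proof.
  intro HQ; split.
  - intros (t & Ht & Hx & Hy). unfold Ys, Xs, Qn. rewrite Hx, Hy.
    split; [ring|]. 
    replace ((fst p + t * (fst q - fst p) - fst p) * (fst q - fst p) +
             (snd p + t * (snd q - snd p) - snd p) * (snd q - snd p))
      with (t * Qn p q) by (unfold Qn; ring).
    unfold Qn in *. split; nra.
  - intros [HY [HX1 HX2]]. exists (Xs p q z / Qn p q).
    split; [split|split].
    + unfold Rdiv; apply Rmult_le_pos; [lra|]; left; apply Rinv_0_lt_compat; lra.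
    + apply Rmult_le_reg_r with (Qn p q); [lra|]. unfold Rdiv.
      rewrite Rmult_assoc, Rinv_l by lra. lra.
    + pose proof (frame_x p q z) as A. rewrite HY in A.
      apply Rmult_eq_reg_l with (Qn p q); [|lra]. field_simplify; [|lra]. 
      rewrite Rmult_minus_distr_l in A. lra.
    + pose proof (frame_y p q z) as A. rewrite HY in A.
      apply Rmult_eq_reg_l with (Qn p q); [|lra]. field_simplify; [|lra].
      rewrite Rmult_minus_distr_l in A. lra.
Qed.

Lemma Xs_par p q a b z t : fst z = fst a + t * (fst b - fst a) -> snd z = snd a + t * (snd b - snd a) ->
  Xs p q z = Xs p q a + t * (Xs p q b - Xs p q a) /\ Ys p q z = Ys p q a + t * (Ys p q b - Ys p q a).
Proof. intros H1 H2. unfold Xs, Ys. rewrite H1, H2. split; ring. Qed.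

Definition loR Xa Xb := Rmax (Rmin Xa Xb) 0.
Definition hiR Xa Xb Q := Rmin (Rmax Xa Xb) Q.
Definition PpR Xa Xb Q := Rmax 0 (hiR Xa Xb Q - loR Xa Xb).
Definition GDR Xa Xb Ya Yb Q :=
  (2*Ya*(Xb-Xa) + (loR Xa Xb + hiR Xa Xb Q - 2*Xa)*(Yb-Ya))*(Xb-Xa).
Definition sgnR x := if Rlt_dec 0 x then 1 else if Rlt_dec x 0 then -1 else 0.

Lemma lohi_range Xa Xb Q v : 0 <= Q ->
  ((Rmin Xa Xb <= v <= Rmax Xa Xb /\ 0 <= v <= Q) <-> loR Xa Xb <= v <= hiR Xa Xb Q).
Proof. intro. unfold loR, hiR, Rmin, Rmax. repeat destruct Rle_dec; split; lra. Qed.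

Lemma par_range Xa Xb t : 0 <= t <= 1 -> Rmin Xa Xb <= Xa + t*(Xb-Xa) <= Rmax Xa Xb.
Proof. intro. unfold Rmin, Rmax. destruct Rle_dec; split; nra. Qed.

Lemma Pp_nonneg Xa Xb Q : 0 <= PpR Xa Xb Q.
Proof. unfold PpR, Rmax. destruct Rle_dec; lra. Qed.

Lemma Pp_le Xa Xb Q : 0 <= Q -> PpR Xa Xb Q <= Q.
Proof. intro. unfold PpR, hiR, loR, Rmin, Rmax. repeat destruct Rle_dec; lra. Qed.

Lemma Pp_pos Xa Xb Q : 0 < PpR Xa Xb Q -> loR Xa Xb < hiR Xa Xb Q /\ PpR Xa Xb Q = hiR Xa Xb Q - loR Xa Xb.
Proof. unfold PpR, Rmax. destruct Rle_dec; lra. Qed.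

Lemma Pp_zero Xa Xb Q : PpR Xa Xb Q <= 0 -> hiR Xa Xb Q <= loR Xa Xb.
Proof. unfold PpR, Rmax. destruct Rle_dec; lra. Qed.

Definition DPR (Xa Xb Ya Yb l sgn : R) :=
  len (fun x => 0 <= x <= l /\ exists t, 0<=t<=1 /\ (Xa + t*(Xb-Xa))/l = x /\
                  sgn*((Ya + t*(Yb-Ya))/l) >= 0).

Definition NTab (Xa Xb Ya Yb Q : R) := forall t, 0 <= t <= 1 -> Ya + t*(Yb-Ya) = 0 ->
   0 <= Xa + t*(Xb-Xa) <= Q -> t*(Xb-Xa) = 0 \/ (t-1)*(Xb-Xa) = 0.

Lemma xl_range x l : l > 0 -> 0 <= x <= l -> 0 <= x*l <= l*l.
Proof. intros H [H1 H2]. split; [apply Rmult_le_pos; lra|apply Rmult_le_compat_r; lra]. Qed.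

Lemma div_l_range x l v : l > 0 -> (v / l = x <-> v = x * l).
Proof. intro. split; intro H0. subst; field; lra. subst; field; lra. Qed.

Lemma DPR_zero Xa Xb Ya Yb l sgn : l > 0 -> PpR Xa Xb (l*l) <= 0 -> DPR Xa Xb Ya Yb l sgn = 0.
Proof.
  intros Hl HP. apply Pp_zero in HP. unfold DPR.
  apply len_sub_single with (c := loR Xa Xb / l).
  intros x [Hx (t & Ht & Hxt & _)].
  apply div_l_range in Hxt; [|lra].
  pose proof (par_range Xa Xb t Ht).
  assert (0 <= x*l <= l*l) by (apply xl_range; lra).
  assert (loR Xa Xb <= x*l <= hiR Xa Xb (l*l)) by (apply lohi_range; [apply Rmult_le_pos; lra|]; split; lra).
  symmetry; apply div_l_range; lra.
Qed.

Section Pos.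
Variables Xa Xb Ya Yb l : R.
Hypothesis Hl : l > 0.
Hypothesis HNT : NTab Xa Xb Ya Yb (l*l).
Hypothesis HP : 0 < PpR Xa Xb (l*l).
Let lo := loR Xa Xb.
Let hi := hiR Xa Xb (l*l).
Let D := Xb - Xa.
Let xm := (lo + hi)/2.
Let tm := (xm - Xa)/D.
Let ym := Ya + tm*(Yb-Ya).

Lemma D_nz : D <> 0.
Proof.
  destruct (Pp_pos _ _ _ HP) as [H _]. fold lo hi in H. intro HD.
  unfold D in HD. assert (Xb = Xa) by lra. subst lo hi. rewrite H0 in H.
  unfold loR, hiR, Rmin, Rmax in H. repeat destruct Rle_dec; lra.
Qed.

Lemma tm_prop : 0 < tm < 1 /\ Xa + tm*(Xb-Xa) = xm /\ 0 < xm < l*l /\ lo < xm < hi.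
Proof.
  destruct (Pp_pos _ _ _ HP) as [H _]. fold lo hi in H.
  pose proof D_nz as HD.
  assert (Hlo: 0 <= lo /\ Rmin Xa Xb <= lo) by (subst lo; unfold loR, Rmax; destruct Rle_dec; lra).
  assert (Hhi: hi <= l*l /\ hi <= Rmax Xa Xb) by (subst hi; unfold hiR, Rmin; destruct Rle_dec; lra).
  assert (Hx: Xa + tm*(Xb-Xa) = xm) by (subst tm D; field; exact HD).
  split; [|split; [exact Hx|split; subst xm; lra]].
  unfold Rmin, Rmax in *. subst tm D.
  destruct (Rle_dec Xa Xb).
  - assert (Xb - Xa > 0) by lra. split.
    + apply Rdiv_lt_0_compat; subst xm; lra.
    + apply Rmult_lt_reg_r with (Xb - Xa); [lra|]. unfold Rdiv. rewrite Rmult_assoc, Rinv_l by lra. subst xm; lra.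
  - assert (Xb - Xa < 0) by lra. split.
    + unfold Rdiv. apply Rmult_lt_reg_r with (-(Xb - Xa)); [lra|]. 
      replace ((xm - Xa) * / (Xb - Xa) * - (Xb - Xa)) with (-(xm - Xa)) by (field; lra). subst xm; lra.
    + unfold Rdiv. apply Rmult_lt_reg_r with (-(Xb - Xa)); [lra|]. 
      replace ((xm - Xa) * / (Xb - Xa) * - (Xb - Xa)) with (-(xm - Xa)) by (field; lra). subst xm; lra.
Qed.

Lemma ym_nz : ym <> 0.
Proof.
  intro Hy. destruct tm_prop as (Ht & Hx & Hxm & _).
  destruct (HNT tm) as [H|H]; [lra|exact Hy|rewrite Hx; lra|..];
  apply Rmult_integral in H; destruct H; try lra; apply D_nz; auto.
Qed.

Lemma GD_eq : GDR Xa Xb Ya Yb (l*l) = 2 * D * D * ym.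
Proof.
  unfold GDR. fold lo hi. destruct tm_prop as (_ & Hx & _).
  subst ym. fold D in Hx |- *. 
  assert (lo + hi = 2*(Xa + tm*D)) by (rewrite Hx; subst xm; field).
  rewrite H. fold D. ring.
Qed.

Lemma one_side s : (s = 1 \/ s = -1) -> s * ym > 0 -> forall t, 0 <= t <= 1 ->
  0 <= Xa + t*(Xb-Xa) <= l*l -> s*(Ya + t*(Yb-Ya)) >= 0 /\ (Ya + t*(Yb-Ya) = 0 -> t = 0 \/ t = 1).
Proof.
  intros Hs Hsy t Ht HX. pose proof D_nz as HD. destruct tm_prop as (Htm & Hxm & Hxm2 & _).
  assert (Hzero: Ya + t*(Yb-Ya) = 0 -> t = 0 \/ t = 1).
  { intro Hy0. destruct (HNT t Ht Hy0 HX) as [H|H]; apply Rmult_integral in H;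
    destruct H; [left|contradiction|right|contradiction]; lra. }
  split; [|exact Hzero].
  destruct (Rge_dec (s*(Ya + t*(Yb-Ya))) 0) as [Hge|Hlt]; [exact Hge|exfalso].
  set (yt := Ya + t*(Yb-Ya)) in *.
  assert (Hyd : yt - ym = (t - tm)*(Yb-Ya)) by (subst yt ym; ring).
  set (lam := ym / (ym - yt)).
  assert (Hden : s*(ym - yt) > 0) by lra.
  assert (Hne : ym - yt <> 0) by (intro H; rewrite H in Hden; lra).
  assert (Hlam: 0 < lam < 1).
  { subst lam. replace (ym / (ym - yt)) with ((s*ym)/(s*(ym-yt))) by (field; destruct Hs; subst; lra).
    split. apply Rdiv_lt_0_compat; lra.
    apply Rmult_lt_reg_r with (s*(ym-yt)); [lra|]. unfold Rdiv. rewrite Rmult_assoc, Rinv_l by lra. lra. }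
  set (t' := tm + lam*(t - tm)).
  assert (Ht' : 0 < t' < 1) by (subst t'; split; nra).
  assert (Hy' : Ya + t'*(Yb-Ya) = 0).
  { subst t' lam. replace (Ya + (tm + ym / (ym - yt) * (t - tm)) * (Yb - Ya))
      with (ym + ym / (ym - yt) * ((t - tm) * (Yb - Ya))) by (subst ym; ring).
    rewrite <- Hyd. field. exact Hne. }
  assert (HX' : 0 <= Xa + t'*(Xb-Xa) <= l*l).
  { replace (Xa + t'*(Xb-Xa)) with ((1-lam)*(Xa + tm*(Xb-Xa)) + lam*(Xa + t*(Xb-Xa))) by (subst t'; ring).
    rewrite Hxm. split; nra. }
  destruct (HNT t' ltac:(lra) Hy' HX') as [H|H]; apply Rmult_integral in H;
    destruct H; try contradiction; lra.
Qed.

Lemma DPR_pos s : (s = 1 \/ s = -1) -> s * ym > 0 ->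
  DPR Xa Xb Ya Yb l s = PpR Xa Xb (l*l) / l /\ DPR Xa Xb Ya Yb l (-s) = 0.
Proof.
  intros Hs Hsy. pose proof D_nz as HD. destruct (Pp_pos _ _ _ HP) as [Hlh HPe]. fold lo hi in Hlh, HPe.
  split.
  - unfold DPR. rewrite HPe. replace ((hi - lo)/l) with (hi/l - lo/l) by (field; lra).
    apply len_interval'.
    { unfold Rdiv. apply Rmult_le_compat_r; [left; apply Rinv_0_lt_compat; lra|lra]. }
    intro x; split.
    + intros [Hx (t & Ht & Hxt & _)].
      apply div_l_range in Hxt; [|lra].
      pose proof (par_range Xa Xb t Ht).
      assert (0 <= x*l <= l*l) by (apply xl_range; lra).
      assert (lo <= x*l <= hi) by (apply lohi_range; [apply Rmult_le_pos; lra|]; split; lra).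
      split; apply div_l_range with (x := _) in Hxt; try lra;
      [apply Rmult_le_reg_r with l; [lra|]; unfold Rdiv; rewrite Rmult_assoc, Rinv_l by lra; lra
      |apply Rmult_le_reg_r with l; [lra|]; unfold Rdiv; rewrite Rmult_assoc, Rinv_l by lra; lra].
    + intros Hx.
      assert (Hv: lo <= x*l <= hi).
      { destruct Hx as [H1 H2]. split.
        - apply Rmult_le_compat_r with (r := l) in H1; [|lra]. unfold Rdiv in H1. rewrite Rmult_assoc, Rinv_l in H1 by lra. lra.
        - apply Rmult_le_compat_r with (r := l) in H2; [|lra]. unfold Rdiv in H2. rewrite Rmult_assoc, Rinv_l in H2 by lra. lra. }
      apply lohi_range in Hv; [|apply Rmult_le_pos; lra]. destruct Hv as [Hv1 Hv2].
      set (t := (x*l - Xa)/(Xb - Xa)).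
      assert (Hxt : Xa + t*(Xb-Xa) = x*l) by (subst t; field; exact HD).
      assert (Ht : 0 <= t <= 1).
      { assert (HD' : Xb - Xa <> 0) by exact HD.
        subst t. unfold Rmin, Rmax in Hv1. destruct (Rle_dec Xa Xb).
        - assert (Xb - Xa > 0) by (destruct (Req_dec Xb Xa); [exfalso; apply HD'; lra|lra]). split.
          + apply Rmult_le_reg_r with (Xb-Xa); [lra|]. unfold Rdiv. rewrite Rmult_assoc, Rinv_l by lra. lra.
          + apply Rmult_le_reg_r with (Xb-Xa); [lra|]. unfold Rdiv. rewrite Rmult_assoc, Rinv_l by lra. lra.
        - assert (Xb - Xa < 0) by lra. unfold Rdiv. split.
          + apply Rmult_le_reg_r with (-(Xb-Xa)); [lra|].
            replace ((x * l - Xa) * / (Xb - Xa) * - (Xb - Xa)) with (-(x*l - Xa)) by (field; lra). lra.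
          + apply Rmult_le_reg_r with (-(Xb-Xa)); [lra|].
            replace ((x * l - Xa) * / (Xb - Xa) * - (Xb - Xa)) with (-(x*l - Xa)) by (field; lra). lra. }
      split.
      * split; [apply Rmult_le_reg_r with l; lra| apply Rmult_le_reg_r with l; lra].
      * exists t. split; [exact Ht|split].
        -- rewrite Hxt. field. lra.
        -- destruct (one_side s Hs Hsy t Ht ltac:(rewrite Hxt; lra)) as [H1 _].
           replace (s * ((Ya + t * (Yb - Ya)) / l)) with ((s*(Ya + t*(Yb-Ya))) * /l) by (field; lra).
           apply Rle_ge. apply Rmult_le_pos; [lra|left; apply Rinv_0_lt_compat; lra].
  - unfold DPR.
    destruct (Req_dec Ya 0) as [HYa|HYa].
    + apply len_sub_single with (c := Xa / l).
      intros x [Hx (t & Ht & Hxt & Hs')].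
      apply div_l_range in Hxt; [|lra].
      assert (0 <= x*l <= l*l) by (apply xl_range; lra).
      destruct (one_side s Hs Hsy t Ht ltac:(lra)) as [H1 H2].
      assert (Hy0 : Ya + t*(Yb-Ya) = 0).
      { replace (-s * ((Ya + t * (Yb - Ya)) / l)) with (-(s*(Ya + t*(Yb-Ya))) * /l) in Hs' by (field; lra).
        assert (/l > 0) by (apply Rinv_0_lt_compat; lra).
        assert (s*(Ya + t*(Yb-Ya)) = 0) by nra. destruct Hs; subst; lra. }
      destruct (H2 Hy0) as [->| ->].
      * symmetry; apply div_l_range; lra.
      * exfalso. unfold ym in Hsy. assert (HYb : Yb = 0) by lra. rewrite HYb, HYa in Hsy. lra.
    + apply len_sub_single with (c := Xb / l).
      intros x [Hx (t & Ht & Hxt & Hs')].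
      apply div_l_range in Hxt; [|lra].
      assert (0 <= x*l <= l*l) by (apply xl_range; lra).
      destruct (one_side s Hs Hsy t Ht ltac:(lra)) as [H1 H2].
      assert (Hy0 : Ya + t*(Yb-Ya) = 0).
      { replace (-s * ((Ya + t * (Yb - Ya)) / l)) with (-(s*(Ya + t*(Yb-Ya))) * /l) in Hs' by (field; lra).
        assert (/l > 0) by (apply Rinv_0_lt_compat; lra).
        assert (s*(Ya + t*(Yb-Ya)) = 0) by nra. destruct Hs; subst; lra. }
      destruct (H2 Hy0) as [-> | ->].
      * exfalso. apply HYa. lra.
      * symmetry; apply div_l_range; lra.
Qed.
End Pos.

Definition OrdR Xa Xb Ya Yb Q := sgnR (GDR Xa Xb Ya Yb Q) * PpR Xa Xb Q / sqrt Q.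

Lemma sgnR_pos x : x > 0 -> sgnR x = 1.
Proof. intro; unfold sgnR; destruct Rlt_dec; lra. Qed.
Lemma sgnR_neg x : x < 0 -> sgnR x = -1.
Proof. intro; unfold sgnR; destruct Rlt_dec; [lra|]; destruct Rlt_dec; lra. Qed.

Lemma Ord_abstract Xa Xb Ya Yb l : l > 0 -> NTab Xa Xb Ya Yb (l*l) ->
  DPR Xa Xb Ya Yb l 1 - DPR Xa Xb Ya Yb l (-1) = OrdR Xa Xb Ya Yb (l*l).
Proof.
  intros Hl HNT. unfold OrdR. rewrite sqrt_square by lra.
  destruct (Rle_dec (PpR Xa Xb (l*l)) 0) as [H0|H0].
  - rewrite !DPR_zero by lra. assert (PpR Xa Xb (l*l) = 0) by (pose proof (Pp_nonneg Xa Xb (l*l)); lra).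
    rewrite H. unfold Rdiv. ring.
  - assert (HP : 0 < PpR Xa Xb (l*l)) by lra.
    pose proof (ym_nz Xa Xb Ya Yb l HNT HP) as Hy.
    pose proof (GD_eq Xa Xb Ya Yb l HP) as HG.
    pose proof (D_nz Xa Xb l HP) as HD.
    set (ym := Ya + ((loR Xa Xb + hiR Xa Xb (l * l)) / 2 - Xa) / (Xb - Xa) * (Yb - Ya)) in *.
    assert (HDD : (Xb - Xa) * (Xb - Xa) > 0).
    { destruct (Rlt_dec 0 (Xb - Xa)); [nra|]. assert (Xb - Xa < 0) by (destruct (Req_dec (Xb-Xa) 0); [contradiction|lra]). nra. }
    destruct (Rlt_dec 0 ym) as [Hp|Hn].
    + destruct (DPR_pos Xa Xb Ya Yb l Hl HNT HP 1 ltac:(lra) ltac:(change (1 * ym > 0); lra)) as [A B].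
      assert (HGp : 2 * (Xb - Xa) * (Xb - Xa) * ym > 0).
      { rewrite Rmult_assoc with (r1 := 2). apply Rmult_lt_0_compat; [apply Rmult_lt_0_compat|]; lra. }
      replace (-(1)) with (-1) in B by ring. rewrite A, B, HG, sgnR_pos by exact HGp. field. lra.
    + assert (ym < 0) by (destruct (Req_dec ym 0); [contradiction|lra]).
      destruct (DPR_pos Xa Xb Ya Yb l Hl HNT HP (-1) ltac:(lra) ltac:(change (-1 * ym > 0); lra)) as [A B].
      replace (- -1) with 1 in B by ring.
      assert (HGp : 2 * (Xb - Xa) * (Xb - Xa) * (-ym) > 0).
      { rewrite Rmult_assoc with (r1 := 2). apply Rmult_lt_0_compat; [apply Rmult_lt_0_compat|]; lra. }
      rewrite A, B, HG, sgnR_neg by lra. field. lra.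
Qed.

Definition NTpair (p q a b : pt) := forall z, on_seg p q z -> on_seg a b z ->
  (z = p \/ z = q) /\ (z = a \/ z = b).

Definition OrdF (p q a b : pt) :=
  OrdR (Xs p q a) (Xs p q b) (Ys p q a) (Ys p q b) (Qn p q).

Lemma NTpair_NTab p q a b : Qn p q > 0 -> NTpair p q a b ->
  NTab (Xs p q a) (Xs p q b) (Ys p q a) (Ys p q b) (Qn p q).
Proof.
  intros HQ HNT t Ht Hy HX.
  set (z := (fst a + t*(fst b - fst a), snd a + t*(snd b - snd a))).
  destruct (Xs_par p q a b z t eq_refl eq_refl) as [E1 E2].
  assert (H1 : on_seg a b z) by (exists t; auto).
  assert (H2 : on_seg p q z) by (apply on_seg_frame; auto; rewrite E1, E2; auto).
  destruct (HNT z H2 H1) as [_ [Ha|Hb]].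
  - left. rewrite Ha in E1. lra.
  - right. rewrite Hb in E1. lra.
Qed.

Lemma d_pm_DPR sgn p q a b : d_pm sgn (p,q) (a,b) =
  DPR (Xs p q a) (Xs p q b) (Ys p q a) (Ys p q b) (Defs.dist p q) sgn.
Proof.
  unfold d_pm, DPR. apply len_ext. intro x. split.
  - intros [Hx (z & (t & Ht & Hzx & Hzy) & HX & HY)]. split; [exact Hx|].
    destruct (Xs_par p q a b z t Hzx Hzy) as [E1 E2].
    exists t. split; [exact Ht|]. rewrite ordX_eq, E1 in HX. rewrite ordY_eq, E2 in HY. auto.
  - intros [Hx (t & Ht & HX & HY)]. split; [exact Hx|].
    set (z := (fst a + t*(fst b - fst a), snd a + t*(snd b - snd a))).
    destruct (Xs_par p q a b z t eq_refl eq_refl) as [E1 E2].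
    exists z. split; [exists t; auto|]. rewrite ordX_eq, ordY_eq, E1, E2. auto.
Qed.

Lemma Qn_zero p q : Qn p q = 0 -> fst q - fst p = 0 /\ snd q - snd p = 0.
Proof. unfold Qn. intro H. pose proof (Rle_0_sqr (fst q - fst p)); pose proof (Rle_0_sqr (snd q - snd p)).
  unfold Rsqr in *. split; nra. Qed.

Lemma Ord_OrdF p q a b : NTpair p q a b -> Ord (p,q) (a,b) = OrdF p q a b.
Proof.
  intro HNT. unfold Ord. rewrite !d_pm_DPR.
  destruct (Req_dec (Qn p q) 0) as [HQ|HQ].
  - unfold OrdF, OrdR, DPR. rewrite dist_sqrtQ, HQ, sqrt_0.
    rewrite (len_sub_single _ 0) by (intros x [Hx _]; lra).
    rewrite (len_sub_single _ 0) by (intros x [Hx _]; lra).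
    destruct (Qn_zero p q HQ) as [A B].
    assert (PpR (Xs p q a) (Xs p q b) 0 = 0).
    { unfold Xs. rewrite A, B. unfold PpR, hiR, loR, Rmin, Rmax. repeat destruct Rle_dec; lra. }
    rewrite H. unfold Rdiv; ring.
  - assert (HQ' : Qn p q > 0) by (pose proof (Qn_nonneg p q); lra).
    pose proof (NTpair_NTab p q a b HQ' HNT) as HN.
    rewrite dist_sqrtQ. unfold OrdF.
    assert (Hl : sqrt (Qn p q) > 0) by (apply sqrt_lt_R0; lra).
    rewrite <- (sqrt_sqrt (Qn p q)) in HN by lra.
    replace (OrdR (Xs p q a) (Xs p q b) (Ys p q a) (Ys p q b) (Qn p q)) with
      (OrdR (Xs p q a) (Xs p q b) (Ys p q a) (Ys p q b) (sqrt (Qn p q) * sqrt (Qn p q)))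
      by (rewrite sqrt_sqrt; lra).
    apply Ord_abstract; auto.
Qed.

Lemma DPR_Y0 Xa Xb l s : DPR Xa Xb 0 0 l s = DPR Xa Xb 0 0 l 1.
Proof.
  unfold DPR. apply len_ext. intro x.
  assert (E : forall s t, s * ((0 + t * (0 - 0)) / l) = 0) by (intros; unfold Rdiv; ring).
  split; intros [H1 (t & H2 & H3 & H4)]; split; auto; exists t; repeat split; auto;
  try rewrite E; lra.
Qed.

Lemma Ord_self p q : Ord (p,q) (p,q) = 0.
Proof.
  unfold Ord. rewrite !d_pm_DPR.
  assert (Hp : Ys p q p = 0) by (unfold Ys; ring).
  assert (Hq : Ys p q q = 0) by (unfold Ys; ring).
  rewrite Hp, Hq. rewrite (DPR_Y0 _ _ _ (-1)). ring.
Qed.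

Lemma GD_nz Xa Xb Ya Yb l : NTab Xa Xb Ya Yb (l*l) -> 0 < PpR Xa Xb (l*l) -> GDR Xa Xb Ya Yb (l*l) <> 0.
Proof.
  intros HNT HP. rewrite (GD_eq Xa Xb Ya Yb l HP).
  pose proof (ym_nz Xa Xb Ya Yb l HNT HP). pose proof (D_nz Xa Xb l HP).
  intro H1. apply Rmult_integral in H1. destruct H1 as [H1|H1]; [|contradiction].
  apply Rmult_integral in H1. destruct H1 as [H1|H1]; [|contradiction].
  apply Rmult_integral in H1. destruct H1 as [H1|H1]; [lra|contradiction].
Qed.

Lemma OrdR_bound Xa Xb Ya Yb Q : 0 <= Q -> Rabs (OrdR Xa Xb Ya Yb Q) <= sqrt Q.
Proof.
  intro HQ. unfold OrdR. pose proof (Pp_nonneg Xa Xb Q). pose proof (Pp_le Xa Xb Q HQ).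
  assert (Hs : Rabs (sgnR (GDR Xa Xb Ya Yb Q)) <= 1).
  { unfold sgnR. repeat destruct Rlt_dec; unfold Rabs; destruct Rcase_abs; lra. }
  destruct (Req_dec Q 0) as [HQ0|HQ0].
  - subst. assert (HP0 : PpR Xa Xb 0 = 0) by lra. rewrite HP0, sqrt_0. unfold Rdiv. rewrite Rmult_0_r, Rmult_0_l, Rabs_R0. lra.
  - assert (Hq : sqrt Q > 0) by (apply sqrt_lt_R0; lra).
    unfold Rdiv. rewrite !Rabs_mult, (Rabs_right (PpR _ _ _)) by lra. rewrite (Rabs_right (/ sqrt Q)) by (left; apply Rinv_0_lt_compat; lra).
    apply Rle_trans with (1 * PpR Xa Xb Q * / sqrt Q).
    + apply Rmult_le_compat_r; [left; apply Rinv_0_lt_compat; lra|]. apply Rmult_le_compat_r; lra.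
    + rewrite Rmult_1_l. apply Rmult_le_reg_r with (sqrt Q); [lra|]. rewrite Rmult_assoc, Rinv_l by lra.
      rewrite sqrt_def by lra. lra.
Qed.

Definition close (n : nat) d (C C' : nat -> pt) := forall v, (v < n)%nat ->
  Rabs (fst (C' v) - fst (C v)) < d /\ Rabs (snd (C' v) - snd (C v)) < d.

Definition cts (n : nat) (F : (nat -> pt) -> R) (C : nat -> pt) :=
  forall e, e > 0 -> exists d, d > 0 /\ forall C', close n d C C' -> Rabs (F C' - F C) < e.

Lemma close_mono n d d' C C' : d' <= d -> close n d' C C' -> close n d C C'.
Proof. intros H Hc v Hv. destruct (Hc v Hv); split; lra. Qed.

Section Cts.
Variable n : nat.
Variable C0 : nat -> pt.

Lemma cts_const c : cts n (fun _ => c) C0.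
Proof. intros e He. exists 1. split; [lra|]. intros. rewrite Rminus_diag, Rabs_R0. lra. Qed.

Lemma cts_fst v : (v < n)%nat -> cts n (fun C => fst (C v)) C0.
Proof. intros Hv e He. exists e. split; [lra|]. intros C' Hc. apply (Hc v Hv). Qed.
Lemma cts_snd v : (v < n)%nat -> cts n (fun C => snd (C v)) C0.
Proof. intros Hv e He. exists e. split; [lra|]. intros C' Hc. apply (Hc v Hv). Qed.

Lemma cts_lip2 (h : R -> R -> R) F G : (forall a b c d, Rabs (h a b - h c d) <= Rabs (a - c) + Rabs (b - d)) ->
  cts n F C0 -> cts n G C0 -> cts n (fun C => h (F C) (G C)) C0.
Proof.
  intros Hh HF HG e He.
  destruct (HF (e/2) ltac:(lra)) as (d1 & Hd1 & H1).
  destruct (HG (e/2) ltac:(lra)) as (d2 & Hd2 & H2).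
  exists (Rmin d1 d2). split; [apply Rmin_pos; auto|]. intros C' Hc.
  specialize (H1 C' (close_mono _ _ _ _ _ (Rmin_l _ _) Hc)).
  specialize (H2 C' (close_mono _ _ _ _ _ (Rmin_r _ _) Hc)).
  specialize (Hh (F C') (G C') (F C0) (G C0)). lra.
Qed.

Lemma cts_plus F G : cts n F C0 -> cts n G C0 -> cts n (fun C => F C + G C) C0.
Proof. apply cts_lip2. intros. replace (a + b - (c + d)) with ((a - c) + (b - d)) by ring. apply Rabs_triang. Qed.
Lemma cts_minus F G : cts n F C0 -> cts n G C0 -> cts n (fun C => F C - G C) C0.
Proof. apply cts_lip2. intros. replace (a - b - (c - d)) with ((a - c) + - (b - d)) by ring.
  rewrite <- (Rabs_Ropp (b - d)). apply Rabs_triang. Qed.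
Lemma cts_opp F : cts n F C0 -> cts n (fun C => - F C) C0.
Proof. intros HF e He. destruct (HF e He) as (d & Hd & H). exists d; split; auto. intros C' Hc.
  replace (- F C' - - F C0) with (- (F C' - F C0)) by ring. rewrite Rabs_Ropp. auto. Qed.

Lemma cts_Rmax F G : cts n F C0 -> cts n G C0 -> cts n (fun C => Rmax (F C) (G C)) C0.
Proof. apply cts_lip2. intros. unfold Rmax. pose proof (Rabs_pos (a - c)); pose proof (Rabs_pos (b-d)).
  repeat destruct Rle_dec; unfold Rabs in *; repeat destruct Rcase_abs; lra. Qed.
Lemma cts_Rmin F G : cts n F C0 -> cts n G C0 -> cts n (fun C => Rmin (F C) (G C)) C0.
Proof. apply cts_lip2. intros. unfold Rmin. pose proof (Rabs_pos (a - c)); pose proof (Rabs_pos (b-d)).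
  repeat destruct Rle_dec; unfold Rabs in *; repeat destruct Rcase_abs; lra. Qed.

Lemma cts_mult F G : cts n F C0 -> cts n G C0 -> cts n (fun C => F C * G C) C0.
Proof.
  intros HF HG e He.
  set (M := Rabs (F C0) + Rabs (G C0) + 1).
  assert (HM : M > 0) by (pose proof (Rabs_pos (F C0)); pose proof (Rabs_pos (G C0)); unfold M; lra).
  set (e1 := Rmin 1 (e / (2*M))).
  assert (He1 : e1 > 0) by (apply Rmin_pos; [lra|]; apply Rdiv_lt_0_compat; lra).
  assert (He1M : e1 * M <= e/2).
  { apply Rle_trans with (e / (2*M) * M). apply Rmult_le_compat_r; [lra|apply Rmin_r]. 
    right; field; lra. }
  destruct (HF e1 He1) as (d1 & Hd1 & H1).
  destruct (HG e1 He1) as (d2 & Hd2 & H2).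
  exists (Rmin d1 d2). split; [apply Rmin_pos; auto|]. intros C' Hc.
  specialize (H1 C' (close_mono _ _ _ _ _ (Rmin_l _ _) Hc)).
  specialize (H2 C' (close_mono _ _ _ _ _ (Rmin_r _ _) Hc)).
  replace (F C' * G C' - F C0 * G C0) with (F C' * (G C' - G C0) + G C0 * (F C' - F C0)) by ring.
  eapply Rle_lt_trans; [apply Rabs_triang|]. rewrite !Rabs_mult.
  assert (Rabs (F C') <= Rabs (F C0) + 1).
  { replace (F C') with (F C0 + (F C' - F C0)) by ring. eapply Rle_trans; [apply Rabs_triang|].
    assert (e1 <= 1) by apply Rmin_l. lra. }
  assert (Rabs (F C') * Rabs (G C' - G C0) <= (Rabs (F C0) + 1) * e1).
  { apply Rmult_le_compat; try apply Rabs_pos; lra. }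
  assert (Rabs (G C0) * Rabs (F C' - F C0) <= Rabs (G C0) * e1).
  { apply Rmult_le_compat_l; [apply Rabs_pos|lra]. }
  assert ((Rabs (F C0) + 1) * e1 + Rabs (G C0) * e1 = e1 * M) by (unfold M; ring).
  lra.
Qed.

Lemma cts_comp (g : R -> R) F : continuity_pt g (F C0) -> cts n F C0 -> cts n (fun C => g (F C)) C0.
Proof.
  intros Hg HF e He.
  destruct (Hg e He) as (a & Ha & H). 
  destruct (HF a Ha) as (d & Hd & H2).
  exists d. split; auto. intros C' Hc.
  destruct (Req_dec (F C') (F C0)) as [E|E].
  - rewrite E, Rminus_diag, Rabs_R0. lra.
  - apply (H (F C')). split; [split; [exact I|auto]|]. apply H2; auto.
Qed.
End Cts.

Ltac cts_tac := repeat (first [apply cts_minus | apply cts_plus | apply cts_mult | apply cts_opp | apply cts_Rmax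
   | apply cts_Rmin | (apply cts_fst; lia) | (apply cts_snd; lia) | apply cts_const]).

Lemma fin_min (m : nat) (P : nat -> R -> Prop) :
  (forall i d d', 0 < d' <= d -> P i d -> P i d') ->
  (forall i, (i < m)%nat -> exists d, d > 0 /\ P i d) -> exists d, d > 0 /\ forall i, (i < m)%nat -> P i d.
Proof.
  intros Hmono. induction m as [|m IH]; intro H.
  - exists 1. split; [lra|]. intros; lia.
  - destruct IH as (d1 & Hd1 & H1). { intros i Hi. apply H. lia. }
    destruct (H m ltac:(lia)) as (d2 & Hd2 & H2).
    exists (Rmin d1 d2). split; [apply Rmin_pos; auto|].
    intros i Hi. destruct (Nat.eq_dec i m) as [->|Hne].
    + apply Hmono with d2; auto. split; [apply Rmin_pos; auto|apply Rmin_r].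
    + apply Hmono with d1; [split; [apply Rmin_pos; auto|apply Rmin_l]|]. apply H1. lia.
Qed.

Lemma sgnR_stable x y : x <> 0 -> Rabs (y - x) < Rabs x -> sgnR y = sgnR x.
Proof.
  intros Hx H. unfold Rabs in H. destruct (Rcase_abs (y - x)), (Rcase_abs x); unfold sgnR;
  repeat destruct Rlt_dec; try lra; destruct (Req_dec x 0); contradiction || lra.
Qed.

Lemma sqrt_lt_sq x e : e > 0 -> 0 <= x -> x < e * e -> sqrt x < e.
Proof.
  intros He Hx H. destruct (Rlt_dec (sqrt x) e) as [|Hn]; auto. exfalso.
  assert (sqrt x >= e) by lra. pose proof (sqrt_sqrt x Hx). nra.
Qed.

Lemma sgnR_abs x : Rabs (sgnR x) <= 1.
Proof. unfold sgnR. repeat destruct Rlt_dec; unfold Rabs; destruct Rcase_abs; lra. Qed.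

Section OFcts.
Variables (n u1 v1 u2 v2 : nat).
Hypotheses (H1 : (u1 < n)%nat) (H2 : (v1 < n)%nat) (H3 : (u2 < n)%nat) (H4 : (v2 < n)%nat).

Definition QF (C : nat -> pt) := Qn (C u1) (C v1).
Definition PpF (C : nat -> pt) := PpR (Xs (C u1) (C v1) (C u2)) (Xs (C u1) (C v1) (C v2)) (Qn (C u1) (C v1)).
Definition GDF (C : nat -> pt) := GDR (Xs (C u1) (C v1) (C u2)) (Xs (C u1) (C v1) (C v2))
   (Ys (C u1) (C v1) (C u2)) (Ys (C u1) (C v1) (C v2)) (Qn (C u1) (C v1)).
Definition OF (C : nat -> pt) := OrdF (C u1) (C v1) (C u2) (C v2).

Lemma OF_eq C : OF C = sgnR (GDF C) * (PpF C * / sqrt (QF C)).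
Proof. unfold OF, OrdF, OrdR, GDF, PpF, QF, Rdiv. ring. Qed.

Lemma QF_cts C0 : cts n QF C0.
Proof. unfold QF, Qn. cts_tac. Qed.
Lemma PpF_cts C0 : cts n PpF C0.
Proof. unfold PpF, PpR, hiR, loR, Xs, Qn. cts_tac. Qed.
Lemma GDF_cts C0 : cts n GDF C0.
Proof. unfold GDF, GDR, hiR, loR, Xs, Ys, Qn. cts_tac. Qed.

Lemma h_cts C0 : QF C0 > 0 -> cts n (fun C => PpF C * / sqrt (QF C)) C0.
Proof.
  intro HQ. apply cts_mult; [apply PpF_cts|].
  apply (cts_comp n C0 (fun x => / sqrt x) QF); [|apply QF_cts].
  change (continuity_pt (/ sqrt)%F (QF C0)).
  apply continuity_pt_inv. apply sqrt_continuity_pt; lra.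
  assert (sqrt (QF C0) > 0) by (apply sqrt_lt_R0; lra). lra.
Qed.

Lemma OF_cts C0 : NTpair (C0 u1) (C0 v1) (C0 u2) (C0 v2) -> cts n OF C0.
Proof.
  intro HNT.
  destruct (Req_dec (QF C0) 0) as [HQ|HQ].
  - intros e He. destruct (QF_cts C0 (e*e) ltac:(nra)) as (d & Hd & Hc).
    exists d. split; auto. intros C' Hcl. specialize (Hc C' Hcl).
    assert (HO0 : OF C0 = 0).
    { pose proof (OrdR_bound (Xs (C0 u1) (C0 v1) (C0 u2)) (Xs (C0 u1) (C0 v1) (C0 v2))
         (Ys (C0 u1) (C0 v1) (C0 u2)) (Ys (C0 u1) (C0 v1) (C0 v2)) (Qn (C0 u1) (C0 v1)) (Qn_nonneg _ _)).
      unfold OF, OrdF. unfold QF in HQ.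
      revert H. generalize (OrdR (Xs (C0 u1) (C0 v1) (C0 u2)) (Xs (C0 u1) (C0 v1) (C0 v2))
       (Ys (C0 u1) (C0 v1) (C0 u2)) (Ys (C0 u1) (C0 v1) (C0 v2)) (Qn (C0 u1) (C0 v1))).
      intros r Hr. rewrite HQ, sqrt_0 in Hr. unfold Rabs in Hr. destruct Rcase_abs; lra. }
    rewrite HO0, Rminus_0_r.
    pose proof (OrdR_bound (Xs (C' u1) (C' v1) (C' u2)) (Xs (C' u1) (C' v1) (C' v2))
         (Ys (C' u1) (C' v1) (C' u2)) (Ys (C' u1) (C' v1) (C' v2)) (Qn (C' u1) (C' v1)) (Qn_nonneg _ _)).
    unfold OF, OrdF. eapply Rle_lt_trans; [exact H|].
    apply sqrt_lt_sq; auto. apply Qn_nonneg. rewrite HQ, Rminus_0_r in Hc. unfold QF in Hc.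
    unfold Rabs in Hc. destruct Rcase_abs; lra.
  - assert (HQ' : QF C0 > 0) by (pose proof (Qn_nonneg (C0 u1) (C0 v1)); unfold QF in *; lra).
    destruct (Rle_dec (PpF C0) 0) as [HP|HP].
    + assert (HP0 : PpF C0 = 0) by (pose proof (Pp_nonneg (Xs (C0 u1) (C0 v1) (C0 u2)) (Xs (C0 u1) (C0 v1) (C0 v2)) (Qn (C0 u1) (C0 v1))); unfold PpF in *; lra).
      intros e He. destruct (h_cts C0 HQ' e He) as (d & Hd & Hc).
      exists d. split; auto. intros C' Hcl. specialize (Hc C' Hcl).
      rewrite !OF_eq. rewrite HP0 in *. rewrite Rmult_0_l, Rmult_0_r, Rminus_0_r in *.
      rewrite Rabs_mult. pose proof (sgnR_abs (GDF C')). pose proof (Rabs_pos (PpF C' * / sqrt (QF C'))).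
      nra.
    + assert (HP' : 0 < PpF C0) by lra.
      assert (HGD : GDF C0 <> 0).
      { unfold GDF. pose proof (NTpair_NTab _ _ _ _ HQ' HNT) as HN. unfold PpF in HP'.
        unfold QF in HQ'. 
        rewrite <- (sqrt_sqrt (Qn (C0 u1) (C0 v1))) in HN, HP' |- * by lra.
        apply GD_nz; auto. }
      intros e He.
      destruct (GDF_cts C0 (Rabs (GDF C0)) (Rabs_pos_lt _ HGD)) as (d1 & Hd1 & Hc1).
      destruct (h_cts C0 HQ' e He) as (d2 & Hd2 & Hc2).
      exists (Rmin d1 d2). split; [apply Rmin_pos; auto|]. intros C' Hcl.
      specialize (Hc1 C' (close_mono _ _ _ _ _ (Rmin_l _ _) Hcl)).
      specialize (Hc2 C' (close_mono _ _ _ _ _ (Rmin_r _ _) Hcl)).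
      rewrite !OF_eq. rewrite (sgnR_stable _ _ HGD Hc1).
      rewrite <- Rmult_minus_distr_l, Rabs_mult. pose proof (sgnR_abs (GDF C0)).
      pose proof (Rabs_pos (PpF C' * / sqrt (QF C') - PpF C0 * / sqrt (QF C0))). nra.
Qed.
End OFcts.

Fixpoint psubst (s : nat -> rpoly) (p : rpoly) : rpoly :=
  match p with
  | PVar i => s i | PConst c => PConst c
  | PAdd p q => PAdd (psubst s p) (psubst s q)
  | PMul p q => PMul (psubst s p) (psubst s q)
  | POpp p => POpp (psubst s p)
  end.

Fixpoint qsubst (s : nat -> rpoly) (f : qf) : qf :=
  match f with
  | FEq0 p => FEq0 (psubst s p) | FPos p => FPos (psubst s p)
  | FAnd f g => FAnd (qsubst s f) (qsubst s g)
  | FOr f g => FOr (qsubst s f) (qsubst s g)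
  | FNot f => FNot (qsubst s f)
  end.

Lemma peval_subst x s p : peval x (psubst s p) = peval (fun i => peval x (s i)) p.
Proof. induction p; simpl; congruence. Qed.

Lemma qeval_subst x s f : qeval x (qsubst s f) <-> qeval (fun i => peval x (s i)) f.
Proof. induction f; simpl; rewrite ?peval_subst; tauto. Qed.

Lemma pvars_subst k s p : (forall i, pvars_lt k (s i)) -> pvars_lt k (psubst s p).
Proof. intro H; induction p; simpl; auto. Qed.
Lemma qvars_subst k s f : (forall i, pvars_lt k (s i)) -> qvars_lt k (qsubst s f).
Proof. intro H; induction f; simpl; auto using pvars_subst. Qed.

Definition fTrue := FEq0 (PConst 0).
Definition fFalse := FPos (PConst 0).
Lemma qeval_fTrue x : qeval x fTrue.
Proof. simpl; auto. Qed.
Lemma qeval_fFalse x : ~ qeval x fFalse.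
Proof. simpl; lra. Qed.

Fixpoint or_list (l : list qf) : qf :=
  match l with nil => fFalse | f :: l => FOr f (or_list l) end.
Lemma qeval_or_list x l : qeval x (or_list l) <-> exists f, In f l /\ qeval x f.
Proof.
  induction l as [|f l IH]; simpl.
  - split; [lra|]. intros (f & [] & _).
  - rewrite IH. split.
    + intros [H|(g & Hg & H)]; eauto.
    + intros (g & [<-|Hg] & H); eauto.
Qed.
Lemma qvars_or_list k l : (forall f, In f l -> qvars_lt k f) -> qvars_lt k (or_list l).
Proof. induction l; simpl; intros; auto. Qed.

Fixpoint and_upto (N : nat) (f : nat -> qf) : qf :=
  match N with O => fTrue | S N => FAnd (and_upto N f) (f N) end.
Lemma qeval_and_upto x N f : qeval x (and_upto N f) <-> forall i, (i < N)%nat -> qeval x (f i).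
Proof.
  induction N as [|N IH]; simpl.
  - split; [intros; lia|auto].
  - rewrite IH. split.
    + intros [H1 H2] i Hi. destruct (Nat.eq_dec i N); [subst; auto|apply H1; lia].
    + intro H. split; auto.
Qed.
Lemma qvars_and_upto k N f : (forall i, (i < N)%nat -> qvars_lt k (f i)) -> qvars_lt k (and_upto N f).
Proof. induction N; simpl; intros H; auto. split; [apply IHN; intros; apply H; lia|apply H; lia]. Qed.

Definition pw := list (qf * rpoly).
Definition pw_ok (f : (nat -> R) -> R) (L : pw) :=
  (forall x, exists c r, In (c, r) L /\ qeval x c) /\
  (forall x c r, In (c, r) L -> qeval x c -> peval x r = f x).

Lemma pw_ok_ext f g L : (forall x, f x = g x) -> pw_ok f L -> pw_ok g L.
Proof. intros E [H1 H2]. split; auto. intros. rewrite <- E. eauto. Qed.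

Definition pw_poly (p : rpoly) : pw := (fTrue, p) :: nil.
Lemma pw_poly_ok p : pw_ok (fun x => peval x p) (pw_poly p).
Proof. split. intro x. exists fTrue, p. split; [left; auto|apply qeval_fTrue].
  intros x c r [E|[]] _. inversion E; auto. Qed.

Definition pw_map2 (op : rpoly -> rpoly -> rpoly) (L1 L2 : pw) : pw :=
  flat_map (fun a => map (fun b => (FAnd (fst a) (fst b), op (snd a) (snd b))) L2) L1.

Lemma in_pw_map2 op L1 L2 c r : In (c, r) (pw_map2 op L1 L2) <->
  exists c1 r1 c2 r2, In (c1,r1) L1 /\ In (c2,r2) L2 /\ c = FAnd c1 c2 /\ r = op r1 r2.
Proof.
  unfold pw_map2. rewrite in_flat_map. split.
  - intros ([c1 r1] & H1 & H2). rewrite in_map_iff in H2. destruct H2 as ([c2 r2] & E & H2).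
    simpl in E. inversion E. eauto 10.
  - intros (c1 & r1 & c2 & r2 & H1 & H2 & -> & ->). exists (c1, r1). split; auto.
    apply in_map_iff. exists (c2, r2). auto.
Qed.

Lemma pw_map2_ok op g f1 f2 L1 L2 : (forall x a b, peval x (op a b) = g (peval x a) (peval x b)) ->
  pw_ok f1 L1 -> pw_ok f2 L2 -> pw_ok (fun x => g (f1 x) (f2 x)) (pw_map2 op L1 L2).
Proof.
  intros Hop [A1 B1] [A2 B2]. split.
  - intro x. destruct (A1 x) as (c1 & r1 & H1 & Q1). destruct (A2 x) as (c2 & r2 & H2 & Q2).
    exists (FAnd c1 c2), (op r1 r2). split; [apply in_pw_map2; eauto 10|simpl; auto].
  - intros x c r Hin Hq. apply in_pw_map2 in Hin. destruct Hin as (c1 & r1 & c2 & r2 & H1 & H2 & -> & ->).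
    destruct Hq as [Q1 Q2]. rewrite Hop. erewrite B1, B2; eauto.
Qed.

Definition rsub a b := PAdd a (POpp b).

Definition pw_sel (L1 L2 : pw) (first_if : rpoly -> rpoly -> qf) : pw :=
  flat_map (fun a => flat_map (fun b =>
     (FAnd (FAnd (fst a) (fst b)) (first_if (snd a) (snd b)), snd a) ::
     (FAnd (FAnd (fst a) (fst b)) (FNot (first_if (snd a) (snd b))), snd b) :: nil) L2) L1.

Lemma in_pw_sel L1 L2 F c r : In (c, r) (pw_sel L1 L2 F) <->
  exists c1 r1 c2 r2, In (c1,r1) L1 /\ In (c2,r2) L2 /\
   ((c = FAnd (FAnd c1 c2) (F r1 r2) /\ r = r1) \/ (c = FAnd (FAnd c1 c2) (FNot (F r1 r2)) /\ r = r2)).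
Proof.
  unfold pw_sel. rewrite in_flat_map. split.
  - intros ([c1 r1] & H1 & H2). rewrite in_flat_map in H2. destruct H2 as ([c2 r2] & H2 & H3).
    simpl in H3. destruct H3 as [E|[E|[]]]; injection E as Ec Er; subst c r; exists c1, r1, c2, r2; auto.
  - intros (c1 & r1 & c2 & r2 & H1 & H2 & H3). exists (c1, r1). split; auto.
    apply in_flat_map. exists (c2, r2). split; auto. simpl.
    destruct H3 as [[-> ->]|[-> ->]]; auto.
Qed.

Lemma pw_sel_ok (h : R -> R -> R) (F : rpoly -> rpoly -> qf) f1 f2 L1 L2 :
  (forall x a b, qeval x (F a b) -> h (peval x a) (peval x b) = peval x a) ->
  (forall x a b, ~ qeval x (F a b) -> h (peval x a) (peval x b) = peval x b) ->
  pw_ok f1 L1 -> pw_ok f2 L2 -> pw_ok (fun x => h (f1 x) (f2 x)) (pw_sel L1 L2 F).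
Proof.
  intros HF1 HF2 [A1 B1] [A2 B2]. split.
  - intro x. destruct (A1 x) as (c1 & r1 & H1 & Q1). destruct (A2 x) as (c2 & r2 & H2 & Q2).
    destruct (classic (qeval x (F r1 r2))) as [Hq|Hq].
    + exists (FAnd (FAnd c1 c2) (F r1 r2)), r1. split; [apply in_pw_sel; eauto 10|simpl; auto].
    + exists (FAnd (FAnd c1 c2) (FNot (F r1 r2))), r2. split; [apply in_pw_sel; eauto 10|simpl; auto].
  - intros x c r Hin Hq. apply in_pw_sel in Hin.
    destruct Hin as (c1 & r1 & c2 & r2 & H1 & H2 & [[Ec Er]|[Ec Er]]); subst c r; destruct Hq as [[Q1 Q2] Q3];
    rewrite <- (B1 x c1 r1), <- (B2 x c2 r2); auto; [rewrite HF1|rewrite HF2]; auto.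
Qed.

Definition fge a b := FNot (FPos (rsub b a)).
Lemma qeval_fge x a b : qeval x (fge a b) <-> peval x a >= peval x b.
Proof. simpl. split; intro; lra. Qed.

Definition pw_max L1 L2 := pw_sel L1 L2 fge.
Lemma pw_max_ok f1 f2 L1 L2 : pw_ok f1 L1 -> pw_ok f2 L2 -> pw_ok (fun x => Rmax (f1 x) (f2 x)) (pw_max L1 L2).
Proof.
  apply pw_sel_ok; intros x a b H; rewrite ?qeval_fge in H; unfold Rmax; destruct Rle_dec; auto;
  try (simpl in H; lra).
Qed.
Definition pw_min L1 L2 := pw_sel L1 L2 (fun a b => fge b a).
Lemma pw_min_ok f1 f2 L1 L2 : pw_ok f1 L1 -> pw_ok f2 L2 -> pw_ok (fun x => Rmin (f1 x) (f2 x)) (pw_min L1 L2).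
Proof.
  apply pw_sel_ok; intros x a b H; rewrite ?qeval_fge in H; unfold Rmin; destruct Rle_dec; auto;
  try (simpl in H; lra).
Qed.

Definition pw_sgn (L : pw) : pw :=
  flat_map (fun a => (FAnd (fst a) (FPos (snd a)), PConst 1) ::
                     (FAnd (fst a) (FPos (POpp (snd a))), PConst (-1)) ::
                     (FAnd (fst a) (FEq0 (snd a)), PConst 0) :: nil) L.
Lemma pw_sgn_ok f L : pw_ok f L -> pw_ok (fun x => sgnR (f x)) (pw_sgn L).
Proof.
  intros [A B]. split.
  - intro x. destruct (A x) as (c & r & H & Q).
    pose proof (B x c r H Q) as E.
    destruct (Rlt_dec 0 (peval x r)) as [Hp|Hp]; [|destruct (Rlt_dec (peval x r) 0) as [Hn|Hn]].
    + exists (FAnd c (FPos r)), (PConst 1). split; [apply in_flat_map; exists (c, r); simpl; auto|simpl; split; auto].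
    + exists (FAnd c (FPos (POpp r))), (PConst (-1)). split; [apply in_flat_map; exists (c, r); simpl; auto|simpl; split; auto; lra].
    + exists (FAnd c (FEq0 r)), (PConst 0). split; [apply in_flat_map; exists (c, r); simpl; auto|simpl; split; auto; lra].
  - intros x c r Hin Hq. apply in_flat_map in Hin. destruct Hin as ([c1 r1] & H1 & H2).
    simpl in H2. pose proof (B x c1 r1 H1) as E.
    destruct H2 as [Ee|[Ee|[Ee|[]]]]; inversion Ee; subst; simpl in Hq; destruct Hq as [Q1 Q2];
    rewrite <- (E Q1); simpl; unfold sgnR; repeat destruct Rlt_dec; lra.
Qed.

Definition V i := PVar i.
Definition K c := PConst c.
Definition env6 (a b c d e y : R) : nat -> R := fun i =>
  match i with 0 => a | 1 => b | 2 => c | 3 => d | 4 => e | 5 => y | _ => 0 end.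

(* base vars: 0 Xa, 1 Xb, 2 Ya, 3 Yb, 4 Q *)
Definition bE := rsub (V 3) (V 2).
Definition bW := rsub (PMul (V 0) (V 3)) (PMul (V 1) (V 2)).
Definition NTbase : qf :=
  FOr (FAnd (FEq0 bE) (FNot (FEq0 (V 2))))
  (FOr (FAnd (FEq0 bE) (FAnd (FEq0 (V 2))
          (FOr (FAnd (FNot (FPos (V 0))) (FNot (FPos (V 1))))
               (FAnd (FNot (FPos (rsub (V 4) (V 0)))) (FNot (FPos (rsub (V 4) (V 1))))))))
   (FAnd (FNot (FEq0 bE))
     (FOr (FPos (PMul (V 2) (V 3)))
     (FOr (FPos (POpp (PMul bW bE)))
     (FOr (FPos (rsub (PMul bW bE) (PMul (V 4) (PMul bE bE))))
          (FAnd (FOr (FEq0 bW) (FEq0 (rsub bW (PMul (V 4) bE))))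
                (FOr (FEq0 (V 2)) (FEq0 (V 3))))))))).

Definition NTfull Xa Xb Ya Yb Q := forall t, 0 <= t <= 1 -> Ya + t*(Yb-Ya) = 0 ->
  0 <= Xa + t*(Xb-Xa) <= Q ->
  (Xa + t*(Xb-Xa) = 0 \/ Xa + t*(Xb-Xa) = Q) /\
  ((t*(Xb-Xa) = 0 /\ t*(Yb-Ya) = 0) \/ ((t-1)*(Xb-Xa) = 0 /\ (t-1)*(Yb-Ya) = 0)).

Lemma NT_sem Xa Xb Ya Yb Q : Q > 0 ->
  (qeval (env6 Xa Xb Ya Yb Q 0) NTbase <-> NTfull Xa Xb Ya Yb Q).
Proof.
  intro HQ. unfold NTbase, bE, bW, rsub, V. simpl.
  change (Yb + - Ya) with (Yb - Ya). change (Xa * Yb + - (Xb * Ya)) with (Xa * Yb - Xb * Ya).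
  change (Q + - Xa) with (Q - Xa). change (Q + - Xb) with (Q - Xb).
  change ((Xa * Yb - Xb * Ya) * (Yb - Ya) + - (Q * ((Yb - Ya) * (Yb - Ya))))
    with ((Xa * Yb - Xb * Ya) * (Yb - Ya) - (Q * ((Yb - Ya) * (Yb - Ya)))).
  change (Xa * Yb - Xb * Ya + - (Q * (Yb - Ya))) with (Xa * Yb - Xb * Ya - Q * (Yb - Ya)).
  set (E := Yb - Ya). set (W := Xa * Yb - Xb * Ya). unfold NTfull. fold E.
  split.
  - intros H t Ht Hy HX.
    destruct H as [[HE HYa]|[[HE [HYa Hc]]|[HE Hc]]].
    + exfalso. rewrite HE in Hy. lra.
    + rewrite HE. rewrite HE in Hy. rewrite Rmult_0_r.
      destruct Hc as [[Ha Hb]|[Ha Hb]].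
      * assert (A1 : (1-t)*Xa <= 0) by nra. assert (A2 : t*Xb <= 0) by nra.
        assert (A3 : Xa + t*(Xb-Xa) = (1-t)*Xa + t*Xb) by ring.
        assert (B1 : (1-t)*Xa = 0) by lra. assert (B2 : t*Xb = 0) by lra.
        split; [left; lra|].
        destruct (Req_dec t 1) as [Ht1|Ht1].
        -- right. subst t. split; ring.
        -- left. split; [|reflexivity].
           assert (Xa = 0). { apply Rmult_integral in B1. destruct B1; [exfalso; apply Ht1; lra|auto]. }
           rewrite H. lra.
      * assert (A1 : (1-t)*(Xa-Q) >= 0) by nra. assert (A2 : t*(Xb-Q) >= 0) by nra.
        assert (A3 : Xa + t*(Xb-Xa) - Q = (1-t)*(Xa-Q) + t*(Xb-Q)) by ring.
        assert (B1 : (1-t)*(Xa-Q) = 0) by lra. assert (B2 : t*(Xb-Q) = 0) by lra.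
        split; [right; lra|].
        destruct (Req_dec t 1) as [Ht1|Ht1].
        -- right. subst t. split; ring.
        -- left. split; [|reflexivity].
           assert (Xa = Q). { apply Rmult_integral in B1. destruct B1; [exfalso; apply Ht1; lra|lra]. }
           rewrite H. replace (t*(Xb-Q)) with 0 in B2 by lra. lra.
    + assert (HtE : t * E = - Ya) by lra.
      assert (HXE : (Xa + t*(Xb-Xa)) * E = W).
      { unfold W. replace ((Xa + t * (Xb - Xa)) * E) with (Xa * E + (t*E)*(Xb - Xa)) by ring.
        rewrite HtE. unfold E. ring. }
      assert (HE2 : E * E > 0) by (destruct (Rlt_dec 0 E); [nra|]; assert (E < 0) by (destruct (Req_dec E 0); [contradiction|lra]); nra).
      set (X := Xa + t*(Xb-Xa)) in *.
      destruct Hc as [Hc|[Hc|[Hc|[Hc1 Hc2]]]].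
      * exfalso. assert (Ya * Yb = -(t*(1-t))*(E*E)).
        { replace Yb with (Ya + E) by (unfold E; ring). replace Ya with (-(t*E)) by lra. ring. }
        assert (t*(1-t) >= 0) by nra. nra.
      * exfalso. rewrite <- HXE in Hc. nra.
      * exfalso. rewrite <- HXE in Hc. nra.
      * split.
        -- destruct Hc1 as [Hw|Hw].
           ++ left. rewrite <- HXE in Hw. apply Rmult_integral in Hw. destruct Hw; auto. exfalso; nra.
           ++ right. rewrite <- HXE in Hw. assert ((X - Q) * E = 0) by lra.
              apply Rmult_integral in H. destruct H; [lra|exfalso; nra].
        -- destruct Hc2 as [Hw|Hw].
           ++ left. rewrite Hw in HtE. assert (t*E = 0) by lra. apply Rmult_integral in H.
              destruct H; [|exfalso; nra]. subst t. split; ring.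
           ++ right. assert ((t-1)*E = 0) by (unfold E in *; lra). split; [|exact H].
              apply Rmult_integral in H. destruct H; [|exfalso; nra].
              replace t with 1 by lra. ring.
  - intro HN. destruct (Req_dec E 0) as [HE|HE].
    + destruct (Req_dec Ya 0) as [HYa|HYa]; [right; left|left; auto].
      split; [exact HE|split; [exact HYa|]].
      apply NNPP. intro Hn. apply not_or_and in Hn. destruct Hn as [Hn1 Hn2].
      apply not_and_or in Hn1. apply not_and_or in Hn2.
      assert (Hm : Xa > 0 \/ Xb > 0) by (destruct Hn1 as [Hn1|Hn1]; apply NNPP in Hn1; auto).
      assert (Hm2 : Q - Xa > 0 \/ Q - Xb > 0) by (destruct Hn2 as [Hn2|Hn2]; apply NNPP in Hn2; auto).
      destruct (Req_dec Xa Xb) as [Hab|Hab].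
      * subst Xb. destruct (HN (1/2)) as [[H|H] _]; try rewrite HE; lra.
      * set (l := sqrt Q).
        assert (HQl : Q = l * l) by (unfold l; rewrite sqrt_sqrt; lra).
        assert (HP : 0 < PpR Xa Xb (l*l)).
        { rewrite <- HQl. unfold PpR, hiR, loR, Rmin, Rmax. repeat destruct Rle_dec; lra. }
        destruct (tm_prop Xa Xb l HP) as (Htm & Hx & Hxm & _).
        match type of Hx with Xa + ?t * _ = _ => set (tm := t) in * end.
        clearbody tm. rewrite <- HQl in Hxm, Hx.
        destruct (HN tm) as [[H|H] _]; try rewrite HE; lra.
    + right; right. split; [exact HE|].
      assert (HE2 : E * E > 0) by (destruct (Rlt_dec 0 E); [nra|]; assert (E < 0) by (destruct (Req_dec E 0); [contradiction|lra]); nra).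
      apply NNPP. intro Hn.
      apply not_or_and in Hn. destruct Hn as [Hn1 Hn]. apply not_or_and in Hn. destruct Hn as [Hn2 Hn].
      apply not_or_and in Hn. destruct Hn as [Hn3 Hn4].
      set (t := - Ya / E).
      assert (HtE : t * E = - Ya) by (unfold t; field; exact HE).
      assert (HYb : Yb = Ya + E) by (unfold E; ring).
      assert (Ht : 0 <= t <= 1).
      { assert (Ya * Yb <= 0) by lra. rewrite HYb in H.
        split.
        - assert (t * (E*E) >= 0). { replace (t * (E*E)) with (-Ya * E) by (rewrite <- HtE; ring). nra. } nra.
        - assert ((1 - t) * (E*E) >= 0). { replace ((1-t) * (E*E)) with (E*E + Ya * E) by (rewrite <- (Ropp_involutive Ya), <- HtE; ring). nra. } nra. }
      assert (HXE : (Xa + t*(Xb-Xa)) * E = W).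
      { unfold W. replace ((Xa + t * (Xb - Xa)) * E) with (Xa * E + (t*E)*(Xb - Xa)) by ring.
        rewrite HtE. unfold E. ring. }
      assert (HX : 0 <= Xa + t*(Xb-Xa) <= Q).
      { split.
        - assert ((Xa + t*(Xb-Xa)) * (E*E) >= 0) by (replace ((Xa + t*(Xb-Xa))*(E*E)) with (W*E) by (rewrite <- HXE; ring); lra). nra.
        - assert ((Q - (Xa + t*(Xb-Xa))) * (E*E) >= 0) by (replace ((Q-(Xa + t*(Xb-Xa)))*(E*E)) with (Q*(E*E) - W*E) by (rewrite <- HXE; ring); lra). nra. }
      destruct (HN t Ht ltac:(lra) HX) as [H1 H2]. apply Hn4. split.
      * destruct H1 as [H1|H1]; [left|right]; rewrite <- HXE, H1; ring.
      * destruct H2 as [[_ H2]|[_ H2]]; [left; lra|right; lra].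
Qed.

Definition NTfullP p q a b := NTfull (Xs p q a) (Xs p q b) (Ys p q a) (Ys p q b) (Qn p q).

Lemma Xs_p p q : Xs p q p = 0. Proof. unfold Xs; ring. Qed.
Lemma Ys_p p q : Ys p q p = 0. Proof. unfold Ys; ring. Qed.
Lemma Xs_q p q : Xs p q q = Qn p q. Proof. unfold Xs, Qn; ring. Qed.
Lemma Ys_q p q : Ys p q q = 0. Proof. unfold Ys; ring. Qed.

Lemma NT_geom p q a b : Qn p q > 0 -> (NTpair p q a b <-> NTfullP p q a b).
Proof.
  intro HQ. unfold NTfullP. split.
  - intros HNT t Ht Hy HX.
    set (z := (fst a + t*(fst b - fst a), snd a + t*(snd b - snd a))).
    destruct (Xs_par p q a b z t eq_refl eq_refl) as [E1 E2].
    assert (H1 : on_seg a b z) by (exists t; auto).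
    assert (H2 : on_seg p q z) by (apply on_seg_frame; auto; rewrite E1, E2; auto).
    destruct (HNT z H2 H1) as [[Hp|Hq] [Ha|Hb]];
    [apply (pt_eq_frame p q) in Hp, Ha; auto|apply (pt_eq_frame p q) in Hp, Hb; auto
    |apply (pt_eq_frame p q) in Hq, Ha; auto|apply (pt_eq_frame p q) in Hq, Hb; auto];
    rewrite ?Xs_p, ?Ys_p, ?Xs_q, ?Ys_q, E1, E2 in *;
    (split; [lra|]); [left|right|left|right]; split; lra.
  - intros HN z H2 H1. destruct H1 as (t & Ht & Hzx & Hzy).
    destruct (Xs_par p q a b z t Hzx Hzy) as [E1 E2].
    apply on_seg_frame in H2; auto. rewrite E1, E2 in H2. destruct H2 as [Hy HX].
    destruct (HN t Ht Hy HX) as [A B]. split.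
    + destruct A as [A|A]; [left|right]; apply (pt_eq_frame p q); auto;
      rewrite ?Xs_p, ?Ys_p, ?Xs_q, ?Ys_q, E1, E2; lra.
    + destruct B as [[B1 B2]|[B1 B2]]; [left|right]; apply (pt_eq_frame p q); auto;
      rewrite E1, E2; lra.
Qed.

Lemma NT_sym p q a b : NTpair p q a b <-> NTpair a b p q.
Proof. unfold NTpair. split; intros H z H1 H2; destruct (H z H2 H1); auto. Qed.

Lemma seg_degen p q z : Qn p q = 0 -> on_seg p q z -> z = p.
Proof.
  intros HQ (t & _ & Hx & Hy). destruct (Qn_zero p q HQ) as [A B].
  rewrite A in Hx. rewrite B in Hy. destruct z, p; simpl in *. f_equal; lra.
Qed.

Lemma NT_char p q a b : NTpair p q a b <->
  (Qn p q > 0 /\ NTfullP p q a b) \/ (Qn p q = 0 /\ Qn a b > 0 /\ NTfullP a b p q) \/ (Qn p q = 0 /\ Qn a b = 0).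
Proof.
  pose proof (Qn_nonneg p q). pose proof (Qn_nonneg a b). split.
  - intro H1. destruct (Req_dec (Qn p q) 0) as [Z1|Z1].
    + destruct (Req_dec (Qn a b) 0) as [Z2|Z2]; [right; right; auto|].
      right; left. split; [auto|split; [lra|]]. apply NT_geom; [lra|]. apply NT_sym; auto.
    + left. split; [lra|]. apply NT_geom; auto; lra.
  - intros [[A B]|[[A [B C]]|[A B]]].
    + apply NT_geom; auto.
    + apply NT_sym. apply NT_geom; auto.
    + intros z H1 H2. apply seg_degen in H1; auto. apply seg_degen in H2; auto.
Qed.

Definition rQn (px py qx qy : rpoly) :=
  PAdd (PMul (rsub qx px) (rsub qx px)) (PMul (rsub qy py) (rsub qy py)).
Definition rXs (px py qx qy zx zy : rpoly) :=
  PAdd (PMul (rsub zx px) (rsub qx px)) (PMul (rsub zy py) (rsub qy py)).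
Definition rYs (px py qx qy zx zy : rpoly) :=
  rsub (PMul (rsub qx px) (rsub zy py)) (PMul (rsub qy py) (rsub zx px)).

Definition cx (v : nat) := PVar (2*v)%nat.
Definition cy (v : nat) := PVar (2*v+1)%nat.
Definition Cz (z : nat -> R) (v : nat) : pt := (z (2*v)%nat, z (2*v+1)%nat).

Lemma peval_rQn z u v : peval z (rQn (cx u) (cy u) (cx v) (cy v)) = Qn (Cz z u) (Cz z v).
Proof. unfold rQn, rsub, Qn, Cz, cx, cy; simpl; ring. Qed.
Lemma peval_rXs z u v w : peval z (rXs (cx u) (cy u) (cx v) (cy v) (cx w) (cy w)) = Xs (Cz z u) (Cz z v) (Cz z w).
Proof. unfold rXs, rsub, Xs, Cz, cx, cy; simpl; ring. Qed.
Lemma peval_rYs z u v w : peval z (rYs (cx u) (cy u) (cx v) (cy v) (cx w) (cy w)) = Ys (Cz z u) (Cz z v) (Cz z w).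
Proof. unfold rYs, rsub, Ys, Cz, cx, cy; simpl; ring. Qed.

Definition sig_e (u1 v1 u2 v2 : nat) (y : rpoly) : nat -> rpoly := fun i =>
  match i with
  | 0 => rXs (cx u1) (cy u1) (cx v1) (cy v1) (cx u2) (cy u2)
  | 1 => rXs (cx u1) (cy u1) (cx v1) (cy v1) (cx v2) (cy v2)
  | 2 => rYs (cx u1) (cy u1) (cx v1) (cy v1) (cx u2) (cy u2)
  | 3 => rYs (cx u1) (cy u1) (cx v1) (cy v1) (cx v2) (cy v2)
  | 4 => rQn (cx u1) (cy u1) (cx v1) (cy v1)
  | 5 => y
  | _ => PConst 0 end.

Lemma sig_e_env z u1 v1 u2 v2 y :
  (fun i => peval z (sig_e u1 v1 u2 v2 y i)) =
  env6 (Xs (Cz z u1) (Cz z v1) (Cz z u2)) (Xs (Cz z u1) (Cz z v1) (Cz z v2))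
       (Ys (Cz z u1) (Cz z v1) (Cz z u2)) (Ys (Cz z u1) (Cz z v1) (Cz z v2))
       (Qn (Cz z u1) (Cz z v1)) (peval z y).
Proof.
  apply functional_extensionality. intro i.
  destruct i as [|[|[|[|[|[|i]]]]]]; unfold sig_e, env6;
  rewrite ?peval_rXs, ?peval_rYs, ?peval_rQn; reflexivity.
Qed.

Lemma pvars_sig_e k u1 v1 u2 v2 y : (2*u1+1 < k)%nat -> (2*v1+1 < k)%nat -> (2*u2+1 < k)%nat -> (2*v2+1 < k)%nat ->
  pvars_lt k y -> forall i, pvars_lt k (sig_e u1 v1 u2 v2 y i).
Proof.
  intros H1 H2 H3 H4 Hy i.
  destruct i as [|[|[|[|[|[|i]]]]]]; unfold sig_e, rXs, rYs, rQn, rsub, cx, cy; simpl; auto; repeat split; lia.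
Qed.

Definition NTpairF (u1 v1 u2 v2 : nat) : qf :=
  FOr (FAnd (FPos (rQn (cx u1) (cy u1) (cx v1) (cy v1))) (qsubst (sig_e u1 v1 u2 v2 (PConst 0)) NTbase))
  (FOr (FAnd (FEq0 (rQn (cx u1) (cy u1) (cx v1) (cy v1)))
             (FAnd (FPos (rQn (cx u2) (cy u2) (cx v2) (cy v2))) (qsubst (sig_e u2 v2 u1 v1 (PConst 0)) NTbase)))
       (FAnd (FEq0 (rQn (cx u1) (cy u1) (cx v1) (cy v1))) (FEq0 (rQn (cx u2) (cy u2) (cx v2) (cy v2))))).

Lemma qeval_FOr x f g : qeval x (FOr f g) <-> qeval x f \/ qeval x g. Proof. reflexivity. Qed.
Lemma qeval_FAnd x f g : qeval x (FAnd f g) <-> qeval x f /\ qeval x g. Proof. reflexivity. Qed.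
Lemma qeval_FNot x f : qeval x (FNot f) <-> ~ qeval x f. Proof. reflexivity. Qed.
Lemma qeval_FPos x p : qeval x (FPos p) <-> peval x p > 0. Proof. reflexivity. Qed.
Lemma qeval_FEq0 x p : qeval x (FEq0 p) <-> peval x p = 0. Proof. reflexivity. Qed.

Lemma NTpairF_sem z u1 v1 u2 v2 :
  qeval z (NTpairF u1 v1 u2 v2) <-> NTpair (Cz z u1) (Cz z v1) (Cz z u2) (Cz z v2).
Proof.
  unfold NTpairF. rewrite !qeval_FOr, !qeval_FAnd, !qeval_FPos, !qeval_FEq0, !qeval_subst, !sig_e_env, !peval_rQn.
  rewrite NT_char. unfold NTfullP.
  pose proof (Qn_nonneg (Cz z u1) (Cz z v1)). pose proof (Qn_nonneg (Cz z u2) (Cz z v2)).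
  split; intros [[A B]|[[A [B C]]|[A B]]].
  - left. split; auto. apply NT_sem in B; auto.
  - right; left. split; auto. split; auto. apply NT_sem in C; auto.
  - right; right; auto.
  - left. split; auto. apply NT_sem; auto.
  - right; left. split; auto. split; auto. apply NT_sem; auto.
  - right; right; auto.
Qed.

Lemma qvars_NTpairF k u1 v1 u2 v2 : (2*u1+1 < k)%nat -> (2*v1+1 < k)%nat -> (2*u2+1 < k)%nat -> (2*v2+1 < k)%nat ->
  qvars_lt k (NTpairF u1 v1 u2 v2).
Proof.
  intros. unfold NTpairF. simpl qvars_lt.
  assert (forall u v, (2*u+1 < k)%nat -> (2*v+1<k)%nat -> pvars_lt k (rQn (cx u) (cy u) (cx v) (cy v))).
  { intros. unfold rQn, rsub, cx, cy. simpl. repeat split; lia. }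
  repeat (first [apply qvars_subst; apply pvars_sig_e; simpl; auto | apply H3; auto | split]).
Qed.

Definition L_lo := pw_max (pw_min (pw_poly (V 0)) (pw_poly (V 1))) (pw_poly (K 0)).
Definition L_hi := pw_min (pw_max (pw_poly (V 0)) (pw_poly (V 1))) (pw_poly (V 4)).
Definition L_Pp := pw_max (pw_poly (K 0)) (pw_map2 rsub L_hi L_lo).
Definition L_GD := pw_map2 PMul
  (pw_map2 PAdd (pw_poly (PMul (PMul (K 2) (V 2)) (rsub (V 1) (V 0))))
     (pw_map2 PMul (pw_map2 rsub (pw_map2 PAdd L_lo L_hi) (pw_poly (PMul (K 2) (V 0))))
        (pw_poly (rsub (V 3) (V 2)))))
  (pw_poly (rsub (V 1) (V 0))).
Definition L_R := pw_map2 PMul (pw_sgn L_GD) L_Pp.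

Lemma L_lo_ok : pw_ok (fun x => loR (x 0%nat) (x 1%nat)) L_lo.
Proof. eapply pw_ok_ext; [|apply pw_max_ok; [apply pw_min_ok; apply pw_poly_ok|apply pw_poly_ok]]. intro x. reflexivity. Qed.
Lemma L_hi_ok : pw_ok (fun x => hiR (x 0%nat) (x 1%nat) (x 4%nat)) L_hi.
Proof. eapply pw_ok_ext; [|apply pw_min_ok; [apply pw_max_ok; apply pw_poly_ok|apply pw_poly_ok]]. intro x. reflexivity. Qed.
Lemma L_Pp_ok : pw_ok (fun x => PpR (x 0%nat) (x 1%nat) (x 4%nat)) L_Pp.
Proof.
  eapply pw_ok_ext; [|apply pw_max_ok; [apply pw_poly_ok|apply (pw_map2_ok rsub Rminus); [reflexivity|apply L_hi_ok|apply L_lo_ok]]].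
  intro x. reflexivity.
Qed.
Lemma L_GD_ok : pw_ok (fun x => GDR (x 0%nat) (x 1%nat) (x 2%nat) (x 3%nat) (x 4%nat)) L_GD.
Proof.
  eapply pw_ok_ext.
  2:{ apply (pw_map2_ok PMul Rmult); [reflexivity| |apply pw_poly_ok].
      apply (pw_map2_ok PAdd Rplus); [reflexivity|apply pw_poly_ok|].
      apply (pw_map2_ok PMul Rmult); [reflexivity| |apply pw_poly_ok].
      apply (pw_map2_ok rsub Rminus); [reflexivity| |apply pw_poly_ok].
      apply (pw_map2_ok PAdd Rplus); [reflexivity|apply L_lo_ok|apply L_hi_ok]. }
  intro x. unfold GDR. simpl. reflexivity.
Qed.
Lemma L_R_ok : pw_ok (fun x => sgnR (GDR (x 0%nat) (x 1%nat) (x 2%nat) (x 3%nat) (x 4%nat)) * PpR (x 0%nat) (x 1%nat) (x 4%nat)) L_R.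
Proof.
  apply (pw_map2_ok PMul Rmult); [reflexivity| |apply L_Pp_ok].
  apply pw_sgn_ok. apply L_GD_ok.
Qed.

Definition OGpiece (cr : qf * rpoly) : qf :=
  FAnd (fst cr) (FAnd (FEq0 (rsub (PMul (PMul (V 5) (V 5)) (V 4)) (PMul (snd cr) (snd cr))))
                      (FNot (FPos (POpp (PMul (V 5) (snd cr)))))).

Definition OGbase : qf :=
  FOr (FAnd (FEq0 (V 4)) (FEq0 (V 5))) (FAnd (FPos (V 4)) (or_list (map OGpiece L_R))).

Lemma sqrt_div_char y R Q : Q > 0 -> (y = R / sqrt Q <-> y*y*Q - R*R = 0 /\ ~ (-(y*R) > 0)).
Proof.
  intro HQ. set (s := sqrt Q). assert (Hs : s > 0) by (apply sqrt_lt_R0; lra).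
  assert (HQs : Q = s*s) by (unfold s; rewrite sqrt_sqrt; lra). rewrite HQs.
  split.
  - intros ->. split; [field; lra|]. intro H.
    assert (R / s * R = (R*R) * / s) by (field; lra).
    assert (R*R*/s >= 0) by (apply Rle_ge, Rmult_le_pos; [nra|left; apply Rinv_0_lt_compat; lra]). lra.
  - intros [H1 H2]. assert (E : (y*s - R)*(y*s + R) = 0) by (rewrite <- H1; ring).
    apply Rmult_integral in E. destruct E as [E|E].
    + apply Rmult_eq_reg_r with s; [|lra]. field_simplify; lra.
    + assert (y*R = -(y*y)*s) by (replace R with (-(y*s)) by lra; ring).
      assert (y*y*s >= 0) by (apply Rle_ge, Rmult_le_pos; nra).
      assert (y*y*s = 0) by lra.
      assert (y = 0) by (apply Rmult_integral in H3; destruct H3 as [H3|H3]; [nra|lra]).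
      subst y. assert (R = 0) by lra. subst R. unfold Rdiv. ring.
Qed.

Lemma OG_sem x : x 4%nat >= 0 -> (qeval x OGbase <-> x 5%nat = OrdR (x 0%nat) (x 1%nat) (x 2%nat) (x 3%nat) (x 4%nat)).
Proof.
  intro HQ. unfold OGbase. rewrite qeval_FOr, !qeval_FAnd, !qeval_FEq0, qeval_FPos, qeval_or_list.
  change (peval x (V 4)) with (x 4%nat). change (peval x (V 5)) with (x 5%nat).
  destruct L_R_ok as [Cov Val].
  assert (HO : OrdR (x 0%nat) (x 1%nat) (x 2%nat) (x 3%nat) (x 4%nat) =
     (sgnR (GDR (x 0%nat) (x 1%nat) (x 2%nat) (x 3%nat) (x 4%nat)) * PpR (x 0%nat) (x 1%nat) (x 4%nat)) / sqrt (x 4%nat))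
    by reflexivity.
  rewrite HO.
  split.
  - intros [[H4 H5]|[H4 (f & Hin & Hq)]].
    + rewrite H4, H5. assert (PpR (x 0%nat) (x 1%nat) 0 = 0) by (unfold PpR, hiR, loR, Rmin, Rmax; repeat destruct Rle_dec; lra).
      rewrite H. unfold Rdiv. ring.
    + apply in_map_iff in Hin. destruct Hin as ([c r] & <- & Hin).
      unfold OGpiece in Hq. rewrite !qeval_FAnd, qeval_FEq0, qeval_FNot, qeval_FPos in Hq. simpl fst in Hq. simpl snd in Hq.
      destruct Hq as [Hc [H1 H2]].
      pose proof (Val x c r Hin Hc) as Er.
      change (peval x (rsub (PMul (PMul (V 5) (V 5)) (V 4)) (PMul r r))) with (x 5%nat * x 5%nat * x 4%nat - peval x r * peval x r) in H1.
      change (peval x (POpp (PMul (V 5) r))) with (- (x 5%nat * peval x r)) in H2.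
      rewrite Er in H1, H2. apply sqrt_div_char; auto.
  - intro H. destruct (Req_dec (x 4%nat) 0) as [H4|H4].
    + left. split; auto. rewrite H, H4.
      assert (PpR (x 0%nat) (x 1%nat) 0 = 0) by (unfold PpR, hiR, loR, Rmin, Rmax; repeat destruct Rle_dec; lra).
      rewrite H0. unfold Rdiv. ring.
    + right. split; [lra|]. destruct (Cov x) as (c & r & Hin & Hc).
      exists (OGpiece (c, r)). split; [apply in_map_iff; exists (c, r); auto|].
      pose proof (Val x c r Hin Hc) as Er.
      unfold OGpiece. rewrite !qeval_FAnd, qeval_FEq0, qeval_FNot, qeval_FPos. simpl fst. simpl snd.
      change (peval x (rsub (PMul (PMul (V 5) (V 5)) (V 4)) (PMul r r))) with (x 5%nat * x 5%nat * x 4%nat - peval x r * peval x r).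
      change (peval x (POpp (PMul (V 5) r))) with (- (x 5%nat * peval x r)).
      rewrite Er. split; auto. apply sqrt_div_char; auto. lra.
Qed.

Lemma det_qf k (fs : list qf) : forall (P : (nat -> R) -> Prop),
  (forall f, In f fs -> qvars_lt k f) ->
  (forall x y, (forall f, In f fs -> (qeval x f <-> qeval y f)) -> (P x <-> P y)) ->
  exists g, qvars_lt k g /\ forall x, P x <-> qeval x g.
Proof.
  induction fs as [|f fs IH]; intros P Hv HP.
  - destruct (classic (exists x, P x)) as [[x0 Hx0]|Hn].
    + exists fTrue. split; [simpl; auto|]. intro x. split; intros _; [apply qeval_fTrue|].
      apply (HP x0 x); auto. intros f [].
    + exists fFalse. split; [simpl; auto|]. intro x. split; intro H; [exfalso; eauto|apply qeval_fFalse in H; contradiction].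
  - set (P1 := fun x => exists y, qeval y f /\ (forall h, In h fs -> (qeval x h <-> qeval y h)) /\ P y).
    set (P0 := fun x => exists y, ~ qeval y f /\ (forall h, In h fs -> (qeval x h <-> qeval y h)) /\ P y).
    assert (Hv' : forall h, In h fs -> qvars_lt k h) by (intros; apply Hv; right; auto).
    destruct (IH P1 Hv') as (g1 & Hg1v & Hg1).
    { intros x x' Hxx'. unfold P1. split; intros (y & A & B & C); exists y; split; auto; split; auto;
      intros h Hh; rewrite <- B; auto; rewrite Hxx'; auto; tauto. }
    destruct (IH P0 Hv') as (g0 & Hg0v & Hg0).
    { intros x x' Hxx'. unfold P0. split; intros (y & A & B & C); exists y; split; auto; split; auto;
      intros h Hh; rewrite <- B; auto; rewrite Hxx'; auto; tauto. }
    exists (FOr (FAnd f g1) (FAnd (FNot f) g0)). split.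
    + simpl. repeat split; auto. apply Hv; left; auto. apply Hv; left; auto.
    + intro x. rewrite qeval_FOr, !qeval_FAnd, qeval_FNot, <- Hg1, <- Hg0. unfold P1, P0. split.
      * intro Hx. destruct (classic (qeval x f)) as [Hf|Hf]; [left|right]; split; auto; exists x; split; auto; split; auto; tauto.
      * intros [[Hf (y & A & B & C)]|[Hf (y & A & B & C)]]; apply (HP y x); auto;
        intros h [<-|Hh]; [tauto|symmetry; auto|tauto|symmetry; auto].
Qed.

Definition lenC (E : list (nat*nat)) (C : nat -> pt) (i : nat) : R :=
  Defs.dist (C (fst (edge E i))) (C (snd (edge E i))).

Lemma merged_ext E l1 l2 x y : (forall i, (i < length E)%nat -> (l1 i = 0 <-> l2 i = 0)) ->
  merged E l1 x y -> merged E l2 x y.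
Proof.
  intros H Hm. induction Hm.
  - apply rt_step. destruct H0 as (i & Hi & Hl & Hxy). exists i. split; auto. split; auto. apply H; auto.
  - apply rt_refl.
  - eapply rt_trans; eauto.
Qed.

Lemma nontouching_ext n E l1 l2 C : (forall i, (i < length E)%nat -> (l1 i = 0 <-> l2 i = 0)) ->
  nontouching n E l1 C -> nontouching n E l2 C.
Proof.
  intros H [A B]. split; auto. intros x y Hx Hy. rewrite B; auto. split; apply merged_ext; auto.
  intros i Hi. symmetry. auto.
Qed.

Lemma fin_bound (f : nat -> R) (m : nat) : exists M, 0 <= M /\ forall i, (i < m)%nat -> f i <= M.
Proof.
  induction m as [|m (M & HM & H)].
  - exists 0. split; [lra|intros; lia].
  - exists (Rmax M (f m)). split; [apply Rle_trans with M; auto; apply Rmax_l|].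
    intros i Hi. destruct (Nat.eq_dec i m) as [->|Hne]; [apply Rmax_r|].
    apply Rle_trans with M; [apply H; lia|apply Rmax_l].
Qed.

Lemma NConf_char n E l C : NConf_all n E l C <-> nontouching n E (lenC E C) C.
Proof.
  split.
  - intros (eps & Heps & l' & Hnn & Hrel & Hcfg & Hnt). eapply nontouching_ext; [|exact Hnt].
    intros i Hi. unfold lenC. rewrite (Hcfg i Hi). tauto.
  - intro Hnt. destruct (fin_bound (fun i => Rabs (lenC E C i - l i)) (length E)) as (M & HM & HB).
    exists M. split; auto. exists (lenC E C). split; [|split; [|split]].
    + intros. unfold lenC, Defs.dist. apply sqrt_pos.
    + intros i Hi. apply HB; auto.
    + intros i Hi. reflexivity.
    + auto.
Qed.

Lemma sqrt_zero_iff x : 0 <= x -> (sqrt x = 0 <-> x = 0).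
Proof. intro H. split; intro H1; [apply sqrt_eq_0; auto|subst; apply sqrt_0]. Qed.

Definition eu (E : list (nat*nat)) i := fst (edge E i).
Definition ev (E : list (nat*nat)) i := snd (edge E i).

Lemma edge_lt n E i : simple_graph n E -> (i < length E)%nat -> (eu E i < n)%nat /\ (ev E i < n)%nat.
Proof.
  intros [_ H] Hi. unfold eu, ev, edge.
  destruct (H (fst (nth i E (0%nat,0%nat))) (snd (nth i E (0%nat,0%nat)))) as [A [B _]]; auto.
  rewrite <- surjective_pairing. apply nth_In; auto.
Qed.

Lemma NT_of_nontouching n E L C i j : nontouching n E L C -> (i < length E)%nat -> (j < length E)%nat -> i <> j ->
  NTpair (C (eu E i)) (C (ev E i)) (C (eu E j)) (C (ev E j)).
Proof. intros [A _] Hi Hj Hij z H1 H2. apply A; auto. Qed.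

Lemma AnnotA_eq n E L C i j : nontouching n E L C -> (i < length E)%nat -> (j < length E)%nat ->
  AnnotA E C i j = if Nat.eqb i j then 0 else OrdF (C (eu E i)) (C (ev E i)) (C (eu E j)) (C (ev E j)).
Proof.
  intros Hnt Hi Hj. unfold AnnotA, Cseg. destruct (Nat.eqb_spec i j) as [->|Hne].
  - apply Ord_self.
  - apply Ord_OrdF. apply (NT_of_nontouching n E L C i j); auto.
Qed.

Theorem continuity_part (n : nat) (E : list (nat * nat)) (l : nat -> R) (HG : simple_graph n E) :
  (forall C, NConf_all n E l C -> forall e, e > 0 -> exists d, d > 0 /\
     forall C', NConf_all n E l C' ->
       (forall v, (v < n)%nat -> Rabs (fst (C' v) - fst (C v)) < d /\ Rabs (snd (C' v) - snd (C v)) < d) ->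
       (forall v, (v < n)%nat -> Rabs (fst (C' v) - fst (C v)) < e /\ Rabs (snd (C' v) - snd (C v)) < e) /\
       (forall i j, (i < length E)%nat -> (j < length E)%nat ->
          Rabs (AnnotA E C' i j - AnnotA E C i j) < e)).
Proof.
  intros C HC e He. pose proof HC as HC'. apply NConf_char in HC'.
  set (P := fun i d => forall j, (j < length E)%nat -> forall C', NConf_all n E l C' -> close n d C C' ->
     Rabs (AnnotA E C' i j - AnnotA E C i j) < e).
  destruct (fin_min (length E) P) as (d & Hd & HP).
  { intros i d d' Hd' H j Hj C' HC1 Hc. apply H; auto. eapply close_mono; [|exact Hc]. lra. }
  { intros i Hi.
    set (Q := fun j d => forall C', NConf_all n E l C' -> close n d C C' ->
       Rabs (AnnotA E C' i j - AnnotA E C i j) < e).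
    destruct (fin_min (length E) Q) as (d & Hd & HQ).
    { intros j d d' Hd' H C' HC1 Hc. apply H; auto. eapply close_mono; [|exact Hc]. lra. }
    { intros j Hj. destruct (Nat.eq_dec i j) as [<-|Hne].
      - exists 1. split; [lra|]. intros C' HC1 _. apply NConf_char in HC1.
        rewrite (AnnotA_eq n E _ C' i i HC1), (AnnotA_eq n E _ C i i HC'), Nat.eqb_refl by auto.
        rewrite Rminus_diag, Rabs_R0. lra.
      - destruct (edge_lt n E i HG Hi) as [A1 A2]. destruct (edge_lt n E j HG Hj) as [A3 A4].
        destruct (OF_cts n _ _ _ _ A1 A2 A3 A4 C (NT_of_nontouching n E _ C i j HC' Hi Hj Hne) e He) as (d & Hd & H).
        exists d. split; auto. intros C' HC1 Hc. apply NConf_char in HC1.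
        rewrite (AnnotA_eq n E _ C' i j HC1), (AnnotA_eq n E _ C i j HC') by auto.
        destruct (Nat.eqb_spec i j); [contradiction|]. apply (H C' Hc). }
    exists d. split; [auto|]. intros j Hj. apply HQ; auto. }
  exists (Rmin d e). split; [apply Rmin_pos; lra|]. intros C' HC1 Hc. split.
  - intros v Hv. destruct (Hc v Hv). pose proof (Rmin_r d e). split; lra.
  - intros i j Hi Hj. apply (HP i Hi j Hj C' HC1). eapply close_mono; [|exact Hc]. apply Rmin_l.
Qed.

Definition NTa (E : list (nat*nat)) : qf :=
  and_upto (length E) (fun i => and_upto (length E) (fun j =>
    if Nat.eqb i j then fTrue else NTpairF (eu E i) (ev E i) (eu E j) (ev E j))).

Definition OutF (n : nat) : qf :=
  and_upto n (fun v => FAnd (FEq0 (rsub (PVar (2*n+2*v)%nat) (cx v))) (FEq0 (rsub (PVar (2*n+2*v+1)%nat) (cy v)))).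

Definition AnnF (n : nat) (E : list (nat*nat)) : qf :=
  and_upto (length E) (fun i => and_upto (length E) (fun j =>
    if Nat.eqb i j then FEq0 (PVar (4*n + i*length E + j)%nat)
    else qsubst (sig_e (eu E i) (ev E i) (eu E j) (ev E j) (PVar (4*n + i*length E + j)%nat)) OGbase)).

Definition EqF (x y : nat) : qf := FAnd (FEq0 (rsub (cx x) (cx y))) (FEq0 (rsub (cy x) (cy y))).
Definition LzF (E : list (nat*nat)) (i : nat) : qf := FEq0 (rQn (cx (eu E i)) (cy (eu E i)) (cx (ev E i)) (cy (ev E i))).

Definition fsM (n : nat) (E : list (nat*nat)) : list qf :=
  map (LzF E) (seq 0 (length E)) ++ flat_map (fun x => map (fun y => EqF x y) (seq 0 n)) (seq 0 n).

Definition Pb (n : nat) (E : list (nat*nat)) (z : nat -> R) : Prop :=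
  forall x y, (x < n)%nat -> (y < n)%nat -> (Cz z x = Cz z y <-> merged E (lenC E (Cz z)) x y).

Lemma EqF_sem z x y : qeval z (EqF x y) <-> Cz z x = Cz z y.
Proof.
  unfold EqF, Cz, rsub, cx, cy. simpl. split.
  - intros [A B]. f_equal; lra.
  - intro H. inversion H. rewrite H1, H2. split; ring.
Qed.

Lemma LzF_sem z E i : qeval z (LzF E i) <-> lenC E (Cz z) i = 0.
Proof.
  unfold LzF, lenC. rewrite qeval_FEq0, peval_rQn, dist_sqrtQ, sqrt_zero_iff by apply Qn_nonneg.
  reflexivity.
Qed.

Lemma Pb_det n E z z' : (forall f, In f (fsM n E) -> (qeval z f <-> qeval z' f)) -> Pb n E z -> Pb n E z'.
Proof.
  intros H HP x y Hx Hy.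
  assert (HE : Cz z x = Cz z y <-> Cz z' x = Cz z' y).
  { rewrite <- !EqF_sem. apply H. unfold fsM. apply in_or_app. right. apply in_flat_map.
    exists x. split; [apply in_seq; lia|]. apply in_map_iff. exists y. split; auto. apply in_seq; lia. }
  assert (HL : forall i, (i < length E)%nat -> (lenC E (Cz z) i = 0 <-> lenC E (Cz z') i = 0)).
  { intros i Hi. rewrite <- !LzF_sem. apply H. unfold fsM. apply in_or_app. left.
    apply in_map_iff. exists i. split; auto. apply in_seq; lia. }
  rewrite <- HE, (HP x y Hx Hy). split; apply merged_ext; intros i Hi; [|symmetry]; auto.
Qed.

Lemma Pb_qf n E k : (2*n <= k)%nat -> (forall i, (i < length E)%nat -> (eu E i < n)%nat /\ (ev E i < n)%nat) ->
  exists g, qvars_lt k g /\ forall z, Pb n E z <-> qeval z g.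
Proof.
  intros Hk He. apply (det_qf k (fsM n E)).
  - intros f Hf. unfold fsM in Hf. apply in_app_or in Hf. destruct Hf as [Hf|Hf].
    + apply in_map_iff in Hf. destruct Hf as (i & <- & Hi). apply in_seq in Hi.
      destruct (He i ltac:(lia)). unfold LzF, rQn, rsub, cx, cy. simpl. repeat split; lia.
    + apply in_flat_map in Hf. destruct Hf as (x & Hx & Hf). apply in_map_iff in Hf. destruct Hf as (y & <- & Hy).
      apply in_seq in Hx. apply in_seq in Hy. unfold EqF, rsub, cx, cy. simpl. repeat split; lia.
  - intros z z' H. split; apply Pb_det; auto. intros f Hf. symmetry. auto.
Qed.

Lemma NTa_sem z E : qeval z (NTa E) <-> forall i j, (i < length E)%nat -> (j < length E)%nat -> i <> j ->
  NTpair (Cz z (eu E i)) (Cz z (ev E i)) (Cz z (eu E j)) (Cz z (ev E j)).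
Proof.
  unfold NTa. rewrite qeval_and_upto. split.
  - intros H i j Hi Hj Hij. specialize (H i Hi). rewrite qeval_and_upto in H. specialize (H j Hj).
    destruct (Nat.eqb_spec i j); [contradiction|]. apply NTpairF_sem; auto.
  - intros H i Hi. rewrite qeval_and_upto. intros j Hj. destruct (Nat.eqb_spec i j); [apply qeval_fTrue|].
    apply NTpairF_sem; auto.
Qed.

Lemma OutF_sem z n : qeval z (OutF n) <-> forall v, (v < n)%nat ->
  z (2 * n + 2 * v)%nat = fst (Cz z v) /\ z (2 * n + 2 * v + 1)%nat = snd (Cz z v).
Proof.
  unfold OutF. rewrite qeval_and_upto. unfold Cz, rsub, cx, cy. simpl. split; intros H v Hv; destruct (H v Hv); split; lra.
Qed.

Lemma AnnF_sem z n E : nontouching n E (lenC E (Cz z)) (Cz z) ->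
  (qeval z (AnnF n E) <-> forall i j, (i < length E)%nat -> (j < length E)%nat ->
      z (4 * n + i * length E + j)%nat = AnnotA E (Cz z) i j).
Proof.
  intro Hnt. unfold AnnF. rewrite qeval_and_upto. split.
  - intros H i j Hi Hj. specialize (H i Hi). rewrite qeval_and_upto in H. specialize (H j Hj).
    rewrite (AnnotA_eq n E _ (Cz z) i j Hnt Hi Hj).
    destruct (Nat.eqb_spec i j).
    + rewrite qeval_FEq0 in H. exact H.
    + rewrite qeval_subst, sig_e_env, OG_sem in H; [exact H|]. simpl. apply Rle_ge, Qn_nonneg.
  - intros H i Hi. rewrite qeval_and_upto. intros j Hj. specialize (H i j Hi Hj).
    rewrite (AnnotA_eq n E _ (Cz z) i j Hnt Hi Hj) in H.
    destruct (Nat.eqb_spec i j).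
    + rewrite qeval_FEq0. exact H.
    + rewrite qeval_subst, sig_e_env, OG_sem; [exact H|]. simpl. apply Rle_ge, Qn_nonneg.
Qed.

Theorem semialg_part (n : nat) (E : list (nat * nat)) (l : nat -> R) (HG : simple_graph n E) :
  semialgebraic (4 * n + length E * length E) (Annot_graph n E l).
Proof.
  set (k := (4 * n + length E * length E)%nat).
  assert (He : forall i, (i < length E)%nat -> (eu E i < n)%nat /\ (ev E i < n)%nat) by (intros; apply edge_lt; auto).
  destruct (Pb_qf n E k ltac:(unfold k; lia) He) as (gb & Hgbv & Hgb).
  exists (FAnd (NTa E) (FAnd gb (FAnd (OutF n) (AnnF n E)))). split.
  - simpl. split; [|split; [exact Hgbv|split]].
    + unfold NTa. apply qvars_and_upto. intros i Hi. apply qvars_and_upto. intros j Hj.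
      destruct (He i Hi), (He j Hj).
      destruct (Nat.eqb i j); [simpl; auto|]. apply qvars_NTpairF; unfold k; lia.
    + unfold OutF. apply qvars_and_upto. intros v Hv. unfold rsub, cx, cy. simpl. unfold k. repeat split; lia.
    + unfold AnnF. apply qvars_and_upto. intros i Hi. apply qvars_and_upto. intros j Hj.
      destruct (He i Hi), (He j Hj).
      assert (Hk : (4 * n + i * length E + j < k)%nat) by (unfold k; nia).
      destruct (Nat.eqb i j); [simpl; auto|]. apply qvars_subst. apply pvars_sig_e; simpl; unfold k in *; lia.
  - intro z. unfold Annot_graph. cbv zeta.
    change (fun v => (z (2 * v)%nat, z (2 * v + 1)%nat)) with (Cz z).
    rewrite NConf_char, !qeval_FAnd, NTa_sem, <- Hgb, OutF_sem. split.
    + intros [[Ha Hb] [HO HA]]. split; [|split; [exact Hb|split; [exact HO|]]].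
      * intros i j Hi Hj Hij. apply (NT_of_nontouching n E (lenC E (Cz z)) (Cz z) i j (conj Ha Hb)); auto.
      * apply AnnF_sem; auto. split; auto.
    + intros [Ha [Hb [HO HA]]].
      assert (Hnt : nontouching n E (lenC E (Cz z)) (Cz z)).
      { split; [|exact Hb]. intros i j w Hi Hj Hij H1 H2. apply (Ha i j Hi Hj Hij w H1 H2). }
      split; [exact Hnt|split; [exact HO|]]. apply AnnF_sem; auto.
Qed.

Theorem mainTheorem2 (n : nat) (E : list (nat * nat)) (l : nat -> R)
  (HG : simple_graph n E) (Hl : forall i, (i < length E)%nat -> 0 <= l i) :
  (* injective on the union of NConf_eps, eps >= 0 *)
  (forall C C' : nat -> pt, NConf_all n E l C -> NConf_all n E l C' ->
     (forall v, (v < n)%nat -> C v = C' v) ->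
     (forall i j, (i < length E)%nat -> (j < length E)%nat -> AnnotA E C i j = AnnotA E C' i j) ->
     forall v, (v < n)%nat -> C v = C' v) /\
  (* semi-algebraic: its graph is a semi-algebraic subset of R^(4n + m^2) *)
  semialgebraic (4 * n + length E * length E) (Annot_graph n E l) /\
  (* continuous on that set *)
  (forall C, NConf_all n E l C -> forall e, e > 0 -> exists d, d > 0 /\
     forall C', NConf_all n E l C' ->
       (forall v, (v < n)%nat -> Rabs (fst (C' v) - fst (C v)) < d /\ Rabs (snd (C' v) - snd (C v)) < d) ->
       (forall v, (v < n)%nat -> Rabs (fst (C' v) - fst (C v)) < e /\ Rabs (snd (C' v) - snd (C v)) < e) /\
       (forall i j, (i < length E)%nat -> (j < length E)%nat ->
          Rabs (AnnotA E C' i j - AnnotA E C i j) < e)).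
Proof.
  split; [|split].
  - intros C C' _ _ H _ v Hv. apply H; auto.
  - apply semialg_part; auto.
  - apply continuity_part; auto.
Qed.
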